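(* Let $p\in\{3,5\}$ and let $H=(a_1,\dots,a_p)^\perp$ be a hyperplane of $\mathbb{R}^p$. If $v\in\mathbb{R}^p$ has pairwise distinct coordinates not summing to $0$, then $|H\cap S_pv|\leq (p-1)!$.
   Context: $S_p$ acts on $\mathbb{R}^p$ by permuting coordinates and $S_pv$ is the orbit of $v$. $(a_1,\dots,a_p)^\perp$ denotes the hyperplane $\{x:\sum_k a_kx_k=0\}$ with $(a_1,\dots,a_p)\neq 0$. *)

(* Defs.v *)
From HB Require Import structures.
From mathcomp Require Import all_boot all_order all_algebra all_fingroup.
From mathcomp Require Import reals.
Set Implicit Arguments. Unset Strict Implicit. Unset Printing Implicit Defensive.
Import Order.TTheory GRing.Theory Num.Theory.
Local Open Scope ring_scope.

(* Vectors of R^p are row vectors 'rV[R]_p.  S_p acts by permuting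
   coordinates: s . v = col_perm s v, i.e. (s . v)_k = v_{s k}. *)

Definition Sp_orbit (R : nzRingType) (p : nat) (v : 'rV[R]_p) : seq 'rV[R]_p :=
  undup [seq col_perm s v | s <- enum [set: 'S_p]].

Definition hyperplane (R : nzRingType) (p : nat) (a : 'rV[R]_p) : pred 'rV[R]_p :=
  fun x => \sum_(k < p) a ord0 k * x ord0 k == 0.

Definition card_hyp_orbit (R : nzRingType) (p : nat) (a v : 'rV[R]_p) : nat :=
  size [seq x <- Sp_orbit v | x \in hyperplane a].

(* Main.v *)
From HB Require Import structures.
From mathcomp Require Import all_boot all_order all_algebra all_fingroup.
From mathcomp Require Import reals.
From mathcomp Require Import ring lra.
Require Import Defs.
Import Order.TTheory GRing.Theory Num.Theory.
Local Open Scope ring_scope.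
Lemma tele {R : realType} (X : nat -> R) n j : (j < n)%N ->
  X j = X 0%N + \sum_(0 <= m < n.-1) (X m.+1 - X m) *+ (m < j)%N.
Proof.
move=> hj.
have -> : \sum_(0 <= m < n.-1) (X m.+1 - X m) *+ (m < j)%N
        = \sum_(0 <= m < n.-1 | (m < j)%N) (X m.+1 - X m).
  rewrite [RHS]big_mkcond /=; apply: eq_bigr => m _; by rewrite mulrb.
have hjn : (j <= n.-1)%N by rewrite -ltnS prednK // (leq_ltn_trans _ hj).
rewrite -(big_nat_widen 0 j n.-1 predT) // telescope_sumr //.
by rewrite addrC subrK.
Qed.

Lemma sum_gt0_nat (R : realType) (F : nat -> R) n k0 :
  (forall k, (k < n)%N -> 0 <= F k) -> (k0 < n)%N -> 0 < F k0 ->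
  0 < \sum_(0 <= k < n) F k.
Proof.
move=> h0 hk hpos; rewrite big_mkord (bigD1 (Ordinal hk)) //=.
have : 0 <= \sum_(i < n | i != Ordinal hk) F i.
  by apply: sumr_ge0 => i _; apply: h0.
lra.
Qed.

Lemma sum_ge0_nat (R : realType) (F : nat -> R) n :
  (forall k, (k < n)%N -> 0 <= F k) -> 0 <= \sum_(0 <= k < n) F k.
Proof. by move=> h0; rewrite big_mkord; apply: sumr_ge0 => i _; apply: h0. Qed.

Definition Lc {R : realType} n (A V : nat -> R) (c : seq nat) :=
  \sum_(0 <= i < n) A i * V (nth 0%N c i).

Definition Ncnt n k m (c : seq nat) : nat :=
  count (fun i => (k < i)%N && (m < nth 0%N c i)%N) (iota 0 n).

Lemma Ncnt_sum n k m c :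
  (Ncnt n k m c) = (\sum_(0 <= i < n) ((k < i) && (m < nth 0 c i)) : nat)%N.
Proof.
rewrite /Ncnt -sum1_count big_mkcond /index_iota subn0; apply: eq_bigr => i _.
by case: ifP.
Qed.

Lemma Lc_expand (R : realType) n (A V : nat -> R) c :
  perm_eq c (iota 0 n) ->
  Lc n A V c = A 0%N * (\sum_(0 <= i < n) V (nth 0%N c i)) +
   \sum_(0 <= k < n.-1) (A k.+1 - A k) *
     (\sum_(0 <= i < n) V 0%N *+ (k < i)%N +
      \sum_(0 <= m < n.-1) (V m.+1 - V m) *+ Ncnt n k m c).
Proof.
move=> hc.
have hsz : size c = n by rewrite (perm_size hc) size_iota.
have hlt : forall i, (i < n)%N -> (nth 0%N c i < n)%N.
  move=> i hi; have : nth 0%N c i \in iota 0 n.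
    by rewrite -(perm_mem hc) mem_nth // hsz.
  by rewrite mem_iota.
rewrite /Lc.
transitivity (\sum_(0 <= i < n) (A 0%N * V (nth 0%N c i) +
   \sum_(0 <= k < n.-1) (A k.+1 - A k) * (V (nth 0%N c i) *+ (k < i)%N))).
  rewrite big_nat_cond [RHS]big_nat_cond; apply: eq_bigr => i /andP[/andP[_ hi] _].
  rewrite {1}(@tele _ A n i hi) mulrDl mulr_suml; congr (_ + _).
  by apply: eq_bigr => k _; rewrite mulrnAl mulrnAr.
rewrite big_split /= -mulr_sumr; congr (_ + _).
rewrite exchange_big /=; apply: eq_bigr => k _; rewrite -mulr_sumr; congr (_ * _).
transitivity (\sum_(0 <= i < n) (V 0%N *+ (k < i)%N +
    \sum_(0 <= m < n.-1) (V m.+1 - V m) *+ ((k < i)%N && (m < nth 0%N c i)%N))).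
  rewrite big_nat_cond [RHS]big_nat_cond; apply: eq_bigr => i /andP[/andP[_ hi] _].
  rewrite {1}(@tele _ V n _ (hlt i hi)) mulrnDl; congr (_ + _).
  rewrite -sumrMnl; apply: eq_bigr => m _; rewrite -mulrnA; congr (_ *+ _).
  by rewrite mulnb andbC.
rewrite big_split /=; congr (_ + _).
rewrite exchange_big /=; apply: eq_bigr => m _.
by rewrite Ncnt_sum sumrMnr.
Qed.

Definition rel n (K : seq bool) (c d : seq nat) : bool :=
  all (fun k => nth false K k ==>
         all (fun m => Ncnt n k m c <= Ncnt n k m d)%N (iota 0 n.-1)) (iota 0 n.-1)
  && has (fun k => nth false K k &&
         has (fun m => Ncnt n k m c < Ncnt n k m d)%N (iota 0 n.-1)) (iota 0 n.-1).

Lemma sumV_perm (R : realType) n (V : nat -> R) c :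
  perm_eq c (iota 0 n) ->
  \sum_(0 <= i < n) V (nth 0%N c i) = \sum_(i <- iota 0 n) V i.
Proof.
move=> hc; have hsz : size c = n by rewrite (perm_size hc) size_iota.
by rewrite -(perm_big _ hc) [RHS](big_nth 0%N) hsz.
Qed.

Lemma rel_lt (R : realType) n (A V : nat -> R) (K : seq bool) c d :
  (forall k, (k < n.-1)%N -> A k <= A k.+1) ->
  (forall k, (k < n.-1)%N -> nth false K k = (A k < A k.+1)) ->
  (forall m, (m < n.-1)%N -> V m < V m.+1) ->
  perm_eq c (iota 0 n) -> perm_eq d (iota 0 n) ->
  rel n K c d -> Lc n A V c < Lc n A V d.
Proof.
move=> hA hK hV hc hd /andP[/allP hall /hasP[k0 hk0 /andP[hK0 /hasP[m0 hm0 hlt0]]]].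
rewrite -subr_gt0 (Lc_expand _ _ _ _ _ hc) (Lc_expand _ _ _ _ _ hd) (sumV_perm _ _ _ _ hc) (sumV_perm _ _ _ _ hd).
set S := \sum_(i <- _) _.
set T := fun k => \sum_(0 <= i < n) V 0%N *+ (k < i)%N.
have -> : forall (x y : R), A 0%N * S + x - (A 0%N * S + y) = x - y by move=> x y; ring.
rewrite -sumrB.
have hk0' : (k0 < n.-1)%N by rewrite mem_iota in hk0.
have hm0' : (m0 < n.-1)%N by rewrite mem_iota in hm0.
apply: (@sum_gt0_nat _ _ _ k0) => //.
- move=> k hk.
  rewrite -mulrBr.
  case hKk: (nth false K k); last first.
    have : ~~ (A k < A k.+1) by rewrite -hK // hKk.
    rewrite -leNgt => h; have := hA k hk => h'.
    have -> : A k.+1 - A k = 0 by apply/eqP; rewrite subr_eq0 eq_le h h'.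
    by rewrite mul0r.
  apply: mulr_ge0; first by move: (hK k hk); rewrite hKk => /esym h; rewrite subr_ge0 ltW.
  have hk' : k \in iota 0 n.-1 by rewrite mem_iota.
  move: (hall k hk'); rewrite hKk /= => /allP hm.
  have -> : forall x y z : R, x + y - (x + z) = y - z by move=> x y z; ring.
  rewrite -sumrB; apply: sum_ge0_nat => m hm'.
  rewrite -mulrnBr; last by apply: hm; rewrite mem_iota.
  by apply: mulrn_wge0; rewrite subr_ge0 ltW // hV.
- rewrite -mulrBr; apply: mulr_gt0; first by move: (hK k0 hk0'); rewrite hK0 => /esym h; rewrite subr_gt0.
  have hk' : k0 \in iota 0 n.-1 by rewrite mem_iota.
  move: (hall k0 hk'); rewrite hK0 /= => /allP hm.
  have -> : forall x y z : R, x + y - (x + z) = y - z by move=> x y z; ring.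
  rewrite -sumrB; apply: (@sum_gt0_nat _ _ _ m0) => //.
    move=> m hm'.
    rewrite -mulrnBr; last by apply: hm; rewrite mem_iota.
    by apply: mulrn_wge0; rewrite subr_ge0 ltW // hV.
  rewrite -mulrnBr; last by rewrite ltnW.
  by rewrite mulrn_wgt0 ?subr_gt0 ?hV // subn_gt0.
Qed.
Definition chain_ok n (K : seq bool) (chs : seq (seq (seq nat))) B :=
 [&& (size chs <= B)%N,
  all (fun c => has (fun ch => c \in ch) chs) (permutations (iota 0 n)) &
  all (fun ch => all (fun x => all (fun y => (x == y) || rel n K x y || rel n K y x) ch) ch) chs].
Fixpoint allbools m : seq (seq bool) :=
  if m is m'.+1 then [seq b :: K | b <- [:: false; true], K <- allbools m'] else [:: [::]].
Definition getch (tbl : seq (seq bool * seq (seq (seq nat)))) K :=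
  (nth (K, [::]) tbl (find (fun p => p.1 == K) tbl)).2.
Definition check n tbl B :=
  all (fun K => has id K ==> chain_ok n.+1 K (getch tbl K) B) (allbools n).
Definition tbl3 : seq (seq bool * seq (seq (seq nat))) :=
  [:: ([:: false; true], [:: [:: [:: 1; 2; 0]; [:: 2; 0; 1]; [:: 0; 1; 2]]; [:: [:: 2; 1; 0]; [:: 0; 2; 1]; [:: 1; 0; 2]]]); ([:: true; false], [:: [:: [:: 2; 0; 1]; [:: 1; 2; 0]; [:: 0; 1; 2]]; [:: [:: 2; 1; 0]; [:: 1; 0; 2]; [:: 0; 2; 1]]]); ([:: true; true], [:: [:: [:: 2; 0; 1]; [:: 0; 2; 1]; [:: 0; 1; 2]]; [:: [:: 2; 1; 0]; [:: 1; 2; 0]; [:: 1; 0; 2]]])].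
Definition tbl5 : seq (seq bool * seq (seq (seq nat))) :=
  [:: ([:: false; false; false; true], [:: [:: [:: 1; 2; 3; 4; 0]; [:: 4; 2; 0; 3; 1]; [:: 0; 3; 4; 1; 2]; [:: 4; 0; 1; 2; 3]; [:: 0; 3; 2; 1; 4]]; [:: [:: 1; 2; 4; 3; 0]; [:: 4; 3; 2; 0; 1]; [:: 0; 1; 3; 4; 2]; [:: 2; 1; 4; 0; 3]; [:: 1; 2; 0; 3; 4]]; [:: [:: 1; 3; 2; 4; 0]; [:: 4; 0; 3; 2; 1]; [:: 0; 4; 1; 3; 2]; [:: 4; 2; 0; 1; 3]; [:: 0; 1; 3; 2; 4]]; [:: [:: 1; 3; 4; 2; 0]; [:: 2; 0; 4; 3; 1]; [:: 3; 4; 1; 0; 2]; [:: 0; 4; 2; 1; 3]; [:: 3; 0; 1; 2; 4]]; [:: [:: 1; 4; 2; 3; 0]; [:: 2; 0; 3; 4; 1]; [:: 4; 3; 0; 1; 2]; [:: 0; 1; 4; 2; 3]; [:: 3; 2; 0; 1; 4]]; [:: [:: 1; 4; 3; 2; 0]; [:: 4; 2; 3; 0; 1]; [:: 0; 3; 1; 4; 2]; [:: 4; 1; 0; 2; 3]; [:: 0; 2; 3; 1; 4]]; [:: [:: 2; 1; 3; 4; 0]; [:: 2; 4; 0; 3; 1]; [:: 3; 0; 1; 4; 2]; [:: 1; 4; 2; 0; 3]; [:: 2; 0; 1; 3; 4]]; [:: [:: 2; 1; 4; 3; 0]; [:: 4; 0; 2; 3; 1]; [:: 0; 4; 3; 1;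 2]; [:: 4; 0; 2; 1; 3]; [:: 0; 3; 1; 2; 4]]; [:: [:: 2; 3; 1; 4; 0]; [:: 3; 4; 2; 0; 1]; [:: 1; 0; 4; 3; 2]; [:: 4; 1; 2; 0; 3]; [:: 0; 2; 1; 3; 4]]; [:: [:: 2; 3; 4; 1; 0]; [:: 4; 3; 0; 2; 1]; [:: 0; 1; 4; 3; 2]; [:: 2; 4; 0; 1; 3]; [:: 1; 0; 3; 2; 4]]; [:: [:: 2; 4; 1; 3; 0]; [:: 2; 3; 0; 4; 1]; [:: 4; 1; 3; 0; 2]; [:: 0; 2; 1; 4; 3]; [:: 3; 1; 2; 0; 4]]; [:: [:: 2; 4; 3; 1; 0]; [:: 3; 4; 0; 2; 1]; [:: 1; 0; 3; 4; 2]; [:: 4; 2; 1; 0; 3]; [:: 0; 1; 2; 3; 4]]; [:: [:: 3; 1; 2; 4; 0]; [:: 3; 2; 4; 0; 1]; [:: 1; 4; 0; 3; 2]; [:: 2; 4; 1; 0; 3]; [:: 1; 0; 2; 3; 4]]; [:: [:: 3; 1; 4; 2; 0]; [:: 3; 2; 0; 4; 1]; [:: 1; 3; 0; 4; 2]; [:: 2; 0; 4; 1; 3]; [:: 1; 3; 0; 2; 4]]; [:: [:: 3; 2; 1; 4; 0]; [:: 3; 0; 2; 4; 1]; [:: 3; 1; 0; 4; 2]; [:: 1; 2; 4; 0; 3]; [:: 2; 1; 0; 3; 4]]; [:: [:: 3; 2; 4; 1; 0]; [:: 2; 4; 3; 0; 1]; [:: 1; 3; 4; 0; 2]; [:: 2;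 0; 1; 4; 3]; [:: 1; 3; 2; 0; 4]]; [:: [:: 3; 4; 1; 2; 0]; [:: 3; 0; 4; 2; 1]; [:: 3; 0; 4; 1; 2]; [:: 1; 4; 0; 2; 3]; [:: 2; 0; 3; 1; 4]]; [:: [:: 3; 4; 2; 1; 0]; [:: 2; 3; 4; 0; 1]; [:: 1; 4; 3; 0; 2]; [:: 2; 1; 0; 4; 3]; [:: 1; 2; 3; 0; 4]]; [:: [:: 4; 1; 2; 3; 0]; [:: 0; 4; 3; 2; 1]; [:: 4; 1; 0; 3; 2]; [:: 0; 4; 1; 2; 3]; [:: 3; 0; 2; 1; 4]]; [:: [:: 4; 1; 3; 2; 0]; [:: 0; 3; 2; 4; 1]; [:: 3; 1; 4; 0; 2]; [:: 1; 2; 0; 4; 3]; [:: 2; 1; 3; 0; 4]]; [:: [:: 4; 2; 1; 3; 0]; [:: 0; 4; 2; 3; 1]; [:: 4; 0; 1; 3; 2]; [:: 1; 0; 2; 4; 3]; [:: 2; 3; 1; 0; 4]]; [:: [:: 4; 2; 3; 1; 0]; [:: 0; 3; 4; 2; 1]; [:: 4; 3; 1; 0; 2]; [:: 0; 1; 2; 4; 3]; [:: 3; 2; 1; 0; 4]]; [:: [:: 4; 3; 1; 2; 0]; [:: 0; 2; 4; 3; 1]; [:: 4; 0; 3; 1; 2]; [:: 0; 2; 4; 1; 3]; [:: 3; 1; 0; 2; 4]]; [:: [:: 4; 3; 2; 1; 0]; [:: 0; 2; 3; 4; 1]; [:: 3; 4; 0; 1; 2]; [:: 1; 0; 4; 2;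 3]; [:: 2; 3; 0; 1; 4]]]); ([:: false; false; true; false], [:: [:: [:: 2; 3; 4; 0; 1]; [:: 1; 4; 3; 2; 0]; [:: 3; 4; 0; 2; 1]; [:: 2; 0; 4; 1; 3]; [:: 1; 4; 0; 2; 3]; [:: 0; 2; 1; 4; 3]]; [:: [:: 2; 3; 4; 1; 0]; [:: 3; 0; 4; 2; 1]; [:: 2; 4; 0; 3; 1]; [:: 1; 0; 4; 2; 3]; [:: 0; 3; 1; 2; 4]; [:: 2; 0; 1; 4; 3]]; [:: [:: 2; 4; 3; 0; 1]; [:: 1; 4; 3; 0; 2]; [:: 4; 0; 3; 1; 2]; [:: 0; 4; 2; 3; 1]; [:: 4; 1; 0; 3; 2]]; [:: [:: 2; 4; 3; 1; 0]; [:: 1; 3; 4; 0; 2]; [:: 4; 1; 2; 3; 0]; [:: 1; 3; 2; 0; 4]; [:: 3; 0; 2; 4; 1]]; [:: [:: 3; 1; 4; 0; 2]; [:: 3; 0; 4; 1; 2]; [:: 2; 4; 0; 1; 3]; [:: 1; 0; 4; 3; 2]; [:: 0; 3; 1; 4; 2]; [:: 2; 0; 1; 3; 4]]; [:: [:: 3; 1; 4; 2; 0]; [:: 4; 0; 3; 2; 1]; [:: 0; 4; 2; 1; 3]; [:: 4; 1; 0; 2; 3]]; [:: [:: 3; 2; 4; 0; 1]; [:: 1; 3; 4; 2; 0]; [:: 4; 1; 2; 0; 3]; [:: 1; 3; 2; 4; 0]; [:: 3; 0; 2; 1; 4]]; [:: [:: 3; 2; 4; 1; 0]; [:: 2; 4;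 1; 3; 0]; [:: 2; 3; 1; 0; 4]; [:: 2; 0; 3; 4; 1]; [:: 0; 1; 3; 2; 4]; [:: 2; 1; 0; 4; 3]]; [:: [:: 3; 4; 1; 0; 2]; [:: 3; 4; 0; 1; 2]; [:: 2; 0; 4; 3; 1]; [:: 4; 0; 1; 2; 3]]; [:: [:: 3; 4; 1; 2; 0]; [:: 1; 4; 2; 0; 3]; [:: 3; 1; 2; 4; 0]; [:: 0; 3; 2; 1; 4]; [:: 1; 3; 0; 2; 4]; [:: 1; 0; 2; 4; 3]]; [:: [:: 3; 4; 2; 0; 1]; [:: 2; 4; 1; 0; 3]; [:: 2; 3; 1; 4; 0]; [:: 2; 0; 3; 1; 4]; [:: 0; 1; 3; 4; 2]; [:: 2; 1; 0; 3; 4]]; [:: [:: 3; 4; 2; 1; 0]; [:: 1; 4; 2; 3; 0]; [:: 2; 1; 3; 4; 0]; [:: 2; 3; 0; 1; 4]; [:: 0; 1; 2; 4; 3]]; [:: [:: 4; 1; 3; 0; 2]; [:: 2; 1; 4; 3; 0]; [:: 2; 1; 3; 0; 4]; [:: 2; 3; 0; 4; 1]; [:: 0; 1; 2; 3; 4]]; [:: [:: 4; 1; 3; 2; 0]; [:: 2; 1; 4; 0; 3]; [:: 3; 1; 2; 0; 4]; [:: 0; 3; 2; 4; 1]; [:: 3; 0; 1; 2; 4]]; [:: [:: 4; 2; 1; 0; 3]; [:: 1; 2; 3; 4; 0]; [:: 3; 2; 0; 1; 4]]; [:: [:: 4; 2; 1; 3; 0]; [:: 1; 2; 3; 0; 4];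 [:: 3; 2; 0; 4; 1]]; [:: [:: 4; 2; 3; 0; 1]; [:: 1; 2; 4; 3; 0]; [:: 3; 2; 1; 0; 4]; [:: 0; 2; 3; 4; 1]; [:: 3; 0; 1; 4; 2]]; [:: [:: 4; 2; 3; 1; 0]; [:: 1; 2; 4; 0; 3]; [:: 3; 2; 1; 4; 0]; [:: 0; 2; 3; 1; 4]; [:: 1; 3; 0; 4; 2]; [:: 1; 0; 2; 3; 4]]; [:: [:: 4; 3; 0; 1; 2]; [:: 0; 2; 4; 3; 1]; [:: 1; 4; 0; 3; 2]; [:: 0; 2; 1; 3; 4]]; [:: [:: 4; 3; 0; 2; 1]; [:: 0; 2; 4; 1; 3]; [:: 4; 0; 1; 3; 2]]; [:: [:: 4; 3; 1; 0; 2]; [:: 0; 4; 3; 2; 1]; [:: 4; 0; 2; 3; 1]; [:: 0; 4; 1; 2; 3]; [:: 1; 0; 3; 4; 2]; [:: 1; 2; 0; 3; 4]]; [:: [:: 4; 3; 1; 2; 0]; [:: 0; 4; 3; 1; 2]; [:: 4; 2; 0; 3; 1]; [:: 0; 1; 4; 2; 3]; [:: 3; 1; 0; 4; 2]]; [:: [:: 4; 3; 2; 0; 1]; [:: 0; 3; 4; 2; 1]; [:: 4; 0; 2; 1; 3]; [:: 0; 4; 1; 3; 2]; [:: 1; 0; 3; 2; 4]; [:: 1; 2; 0; 4; 3]]; [:: [:: 4; 3; 2; 1; 0]; [:: 0; 3; 4; 1; 2]; [:: 4; 2; 0; 1; 3]; [:: 0; 1; 4; 3; 2]; [:: 3; 1;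 0; 2; 4]]]); ([:: false; false; true; true], [:: [:: [:: 2; 3; 4; 0; 1]; [:: 3; 1; 4; 0; 2]; [:: 4; 0; 3; 1; 2]; [:: 0; 4; 1; 3; 2]; [:: 1; 4; 0; 2; 3]; [:: 0; 2; 1; 4; 3]; [:: 1; 2; 0; 3; 4]]; [:: [:: 2; 3; 4; 1; 0]; [:: 2; 1; 4; 3; 0]; [:: 2; 1; 4; 0; 3]; [:: 4; 2; 0; 1; 3]]; [:: [:: 2; 4; 3; 0; 1]; [:: 3; 0; 4; 2; 1]; [:: 4; 3; 0; 1; 2]; [:: 0; 1; 4; 3; 2]; [:: 3; 0; 1; 4; 2]]; [:: [:: 2; 4; 3; 1; 0]; [:: 1; 3; 4; 2; 0]; [:: 1; 3; 4; 0; 2]; [:: 4; 2; 1; 0; 3]; [:: 0; 2; 4; 1; 3]; [:: 2; 3; 0; 1; 4]; [:: 0; 1; 3; 2; 4]; [:: 2; 0; 1; 3; 4]]; [:: [:: 3; 1; 4; 2; 0]; [:: 2; 4; 1; 3; 0]; [:: 2; 3; 1; 4; 0]; [:: 2; 3; 1; 0; 4]; [:: 0; 3; 2; 1; 4]; [:: 3; 0; 1; 2; 4]]; [:: [:: 3; 2; 4; 0; 1]; [:: 1; 2; 4; 0; 3]; [:: 3; 2; 1; 0; 4]]; [:: [:: 3; 2; 4; 1; 0]; [:: 1; 4; 3; 2; 0]; [:: 1; 4; 2; 3; 0]; [:: 2; 1; 3; 4; 0]; [:: 3; 1; 2; 0; 4]; [:: 0; 2; 3; 1; 4]; [:: 3;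 1; 0; 2; 4]]; [:: [:: 3; 4; 0; 2; 1]; [:: 4; 2; 0; 3; 1]; [:: 0; 2; 3; 4; 1]; [:: 3; 1; 0; 4; 2]]; [:: [:: 3; 4; 1; 0; 2]; [:: 3; 0; 4; 1; 2]; [:: 1; 4; 0; 3; 2]; [:: 1; 0; 4; 2; 3]; [:: 1; 0; 2; 4; 3]; [:: 0; 2; 1; 3; 4]]; [:: [:: 3; 4; 1; 2; 0]; [:: 1; 2; 4; 3; 0]; [:: 3; 2; 1; 4; 0]; [:: 1; 2; 3; 0; 4]; [:: 3; 2; 0; 1; 4]]; [:: [:: 3; 4; 2; 0; 1]; [:: 1; 4; 3; 0; 2]; [:: 4; 1; 2; 0; 3]; [:: 0; 4; 2; 1; 3]; [:: 4; 1; 0; 2; 3]]; [:: [:: 3; 4; 2; 1; 0]; [:: 0; 4; 3; 2; 1]; [:: 4; 0; 2; 3; 1]; [:: 0; 3; 2; 4; 1]; [:: 1; 0; 3; 4; 2]; [:: 1; 0; 3; 2; 4]; [:: 0; 1; 2; 3; 4]]; [:: [:: 4; 0; 3; 2; 1]; [:: 2; 4; 0; 3; 1]; [:: 2; 0; 3; 4; 1]; [:: 1; 3; 0; 4; 2]; [:: 0; 1; 2; 4; 3]; [:: 2; 1; 0; 3; 4]]; [:: [:: 4; 1; 2; 3; 0]; [:: 3; 1; 2; 4; 0]; [:: 1; 3; 2; 0; 4]; [:: 3; 0; 2; 1; 4]]; [:: [:: 4; 1; 3; 0; 2]; [:: 2; 4; 1; 0; 3]; [:: 2; 1; 3; 0;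 4]; [:: 2; 0; 3; 1; 4]; [:: 0; 3; 1; 2; 4]; [:: 1; 0; 2; 3; 4]]; [:: [:: 4; 1; 3; 2; 0]; [:: 1; 3; 2; 4; 0]; [:: 2; 3; 0; 4; 1]; [:: 0; 3; 1; 4; 2]; [:: 2; 0; 1; 4; 3]]; [:: [:: 4; 2; 1; 3; 0]; [:: 1; 2; 3; 4; 0]; [:: 3; 0; 2; 4; 1]; [:: 0; 1; 3; 4; 2]; [:: 1; 3; 0; 2; 4]]; [:: [:: 4; 2; 3; 0; 1]; [:: 0; 4; 3; 1; 2]; [:: 4; 1; 0; 3; 2]]; [:: [:: 4; 2; 3; 1; 0]; [:: 0; 4; 2; 3; 1]; [:: 3; 2; 0; 4; 1]]; [:: [:: 4; 3; 0; 2; 1]; [:: 2; 0; 4; 3; 1]; [:: 2; 4; 0; 1; 3]; [:: 0; 1; 4; 2; 3]; [:: 2; 1; 0; 4; 3]]; [:: [:: 4; 3; 1; 0; 2]; [:: 1; 4; 2; 0; 3]; [:: 4; 0; 2; 1; 3]]; [:: [:: 4; 3; 1; 2; 0]; [:: 0; 3; 4; 2; 1]; [:: 3; 4; 0; 1; 2]; [:: 1; 0; 4; 3; 2]; [:: 4; 0; 1; 2; 3]]; [:: [:: 4; 3; 2; 0; 1]; [:: 0; 3; 4; 1; 2]; [:: 4; 0; 1; 3; 2]]; [:: [:: 4; 3; 2; 1; 0]; [:: 0; 2; 4; 3; 1]; [:: 2; 0; 4; 1; 3]; [:: 0; 4; 1; 2; 3]; [:: 1; 2; 0; 4; 3]]]);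 ([:: false; true; false; false], [:: [:: [:: 3; 4; 0; 1; 2]; [:: 2; 4; 3; 1; 0]; [:: 3; 2; 4; 0; 1]; [:: 1; 3; 0; 4; 2]; [:: 2; 1; 4; 0; 3]]; [:: [:: 3; 4; 0; 2; 1]; [:: 2; 4; 3; 0; 1]; [:: 3; 2; 4; 1; 0]; [:: 1; 3; 0; 2; 4]; [:: 2; 1; 4; 3; 0]]; [:: [:: 3; 4; 1; 0; 2]; [:: 2; 4; 1; 3; 0]; [:: 3; 2; 0; 1; 4]; [:: 1; 3; 4; 2; 0]; [:: 2; 1; 0; 3; 4]]; [:: [:: 3; 4; 1; 2; 0]; [:: 2; 4; 1; 0; 3]; [:: 3; 2; 0; 4; 1]; [:: 1; 3; 4; 0; 2]; [:: 2; 1; 0; 4; 3]]; [:: [:: 3; 4; 2; 0; 1]; [:: 2; 4; 0; 3; 1]; [:: 3; 2; 1; 0; 4]; [:: 1; 3; 2; 4; 0]; [:: 2; 1; 3; 0; 4]]; [:: [:: 3; 4; 2; 1; 0]; [:: 2; 4; 0; 1; 3]; [:: 3; 2; 1; 4; 0]; [:: 1; 3; 2; 0; 4]; [:: 2; 1; 3; 4; 0]]; [:: [:: 4; 1; 0; 2; 3]; [:: 0; 4; 3; 2; 1]; [:: 3; 0; 1; 2; 4]]; [:: [:: 4; 1; 0; 3; 2]; [:: 0; 4; 3; 1; 2]; [:: 3; 0; 1; 4; 2]]; [:: [:: 4; 1; 2; 0; 3]; [:: 0; 4; 2; 3; 1]; [:: 3; 0; 2; 1; 4]]; [:: [:: 4;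 1; 2; 3; 0]; [:: 0; 4; 2; 1; 3]; [:: 3; 0; 2; 4; 1]]; [:: [:: 4; 1; 3; 0; 2]; [:: 0; 4; 1; 3; 2]; [:: 3; 0; 4; 1; 2]]; [:: [:: 4; 1; 3; 2; 0]; [:: 0; 4; 1; 2; 3]; [:: 3; 0; 4; 2; 1]]; [:: [:: 4; 2; 0; 1; 3]; [:: 2; 3; 4; 1; 0]; [:: 3; 1; 0; 2; 4]; [:: 1; 2; 4; 3; 0]; [:: 0; 2; 1; 3; 4]; [:: 1; 0; 4; 3; 2]]; [:: [:: 4; 2; 0; 3; 1]; [:: 2; 3; 4; 0; 1]; [:: 3; 1; 0; 4; 2]; [:: 1; 2; 4; 0; 3]; [:: 0; 2; 1; 4; 3]; [:: 1; 0; 4; 2; 3]]; [:: [:: 4; 2; 1; 0; 3]; [:: 2; 3; 1; 4; 0]; [:: 3; 1; 2; 0; 4]; [:: 1; 2; 3; 4; 0]; [:: 0; 2; 3; 1; 4]; [:: 1; 0; 3; 4; 2]]; [:: [:: 4; 2; 1; 3; 0]; [:: 2; 3; 1; 0; 4]; [:: 3; 1; 2; 4; 0]; [:: 1; 2; 3; 0; 4]; [:: 0; 2; 3; 4; 1]; [:: 1; 0; 3; 2; 4]]; [:: [:: 4; 2; 3; 0; 1]; [:: 2; 3; 0; 4; 1]; [:: 3; 1; 4; 0; 2]; [:: 1; 2; 0; 4; 3]; [:: 0; 2; 4; 1; 3]; [:: 1; 0; 2; 4; 3]]; [:: [:: 4; 2; 3; 1; 0]; [:: 2; 3; 0; 1;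 4]; [:: 3; 1; 4; 2; 0]; [:: 1; 2; 0; 3; 4]; [:: 0; 2; 4; 3; 1]; [:: 1; 0; 2; 3; 4]]; [:: [:: 4; 3; 0; 1; 2]; [:: 1; 4; 3; 2; 0]; [:: 4; 0; 1; 2; 3]; [:: 0; 3; 4; 2; 1]; [:: 2; 0; 1; 3; 4]; [:: 0; 1; 4; 3; 2]]; [:: [:: 4; 3; 0; 2; 1]; [:: 1; 4; 3; 0; 2]; [:: 4; 0; 1; 3; 2]; [:: 0; 3; 4; 1; 2]; [:: 2; 0; 1; 4; 3]; [:: 0; 1; 4; 2; 3]]; [:: [:: 4; 3; 1; 0; 2]; [:: 1; 4; 2; 3; 0]; [:: 4; 0; 2; 1; 3]; [:: 0; 3; 2; 4; 1]; [:: 2; 0; 3; 1; 4]; [:: 0; 1; 3; 4; 2]]; [:: [:: 4; 3; 1; 2; 0]; [:: 1; 4; 2; 0; 3]; [:: 4; 0; 2; 3; 1]; [:: 0; 3; 2; 1; 4]; [:: 2; 0; 3; 4; 1]; [:: 0; 1; 3; 2; 4]]; [:: [:: 4; 3; 2; 0; 1]; [:: 1; 4; 0; 3; 2]; [:: 4; 0; 3; 1; 2]; [:: 0; 3; 1; 4; 2]; [:: 2; 0; 4; 1; 3]; [:: 0; 1; 2; 4; 3]]; [:: [:: 4; 3; 2; 1; 0]; [:: 1; 4; 0; 2; 3]; [:: 4; 0; 3; 2; 1]; [:: 0; 3; 1; 2; 4]; [:: 2; 0; 4; 3; 1]; [:: 0; 1; 2; 3; 4]]]); ([:: false; true; false;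 true], [:: [:: [:: 2; 3; 4; 1; 0]; [:: 2; 3; 0; 4; 1]; [:: 2; 3; 1; 0; 4]; [:: 3; 1; 0; 2; 4]]; [:: [:: 2; 4; 1; 3; 0]; [:: 2; 3; 1; 4; 0]; [:: 3; 2; 4; 0; 1]; [:: 3; 2; 0; 1; 4]; [:: 1; 3; 2; 0; 4]; [:: 0; 3; 2; 1; 4]; [:: 0; 2; 3; 1; 4]; [:: 0; 1; 2; 3; 4]]; [:: [:: 2; 4; 3; 1; 0]; [:: 1; 3; 2; 4; 0]; [:: 1; 2; 3; 4; 0]; [:: 2; 1; 0; 4; 3]; [:: 2; 1; 0; 3; 4]]; [:: [:: 3; 2; 1; 4; 0]; [:: 3; 1; 4; 2; 0]; [:: 1; 2; 4; 3; 0]; [:: 2; 1; 4; 0; 3]; [:: 1; 2; 3; 0; 4]]; [:: [:: 3; 2; 4; 1; 0]; [:: 3; 1; 2; 4; 0]; [:: 2; 1; 3; 4; 0]; [:: 2; 0; 4; 3; 1]; [:: 1; 0; 3; 4; 2]; [:: 0; 1; 4; 2; 3]; [:: 1; 0; 2; 3; 4]]; [:: [:: 3; 4; 0; 1; 2]; [:: 4; 2; 0; 1; 3]; [:: 2; 3; 0; 1; 4]; [:: 3; 1; 2; 0; 4]]; [:: [:: 3; 4; 0; 2; 1]; [:: 2; 4; 0; 3; 1]; [:: 3; 2; 0; 4; 1]; [:: 1; 3; 4; 0; 2]; [:: 0; 3; 1; 4; 2]; [:: 3; 0; 2; 1; 4]]; [:: [:: 3; 4; 1; 0; 2]; [:: 4;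 1; 3; 0; 2]; [:: 1; 4; 0; 2; 3]; [:: 0; 4; 2; 1; 3]; [:: 0; 2; 4; 1; 3]; [:: 0; 2; 1; 3; 4]; [:: 0; 1; 3; 2; 4]]; [:: [:: 3; 4; 1; 2; 0]; [:: 1; 4; 2; 3; 0]; [:: 4; 1; 0; 3; 2]; [:: 1; 3; 0; 4; 2]; [:: 0; 3; 4; 1; 2]; [:: 0; 2; 1; 4; 3]; [:: 2; 0; 3; 1; 4]]; [:: [:: 3; 4; 2; 0; 1]; [:: 2; 4; 3; 0; 1]; [:: 2; 3; 4; 0; 1]; [:: 3; 1; 0; 4; 2]; [:: 1; 2; 4; 0; 3]; [:: 1; 2; 0; 3; 4]]; [:: [:: 3; 4; 2; 1; 0]; [:: 1; 4; 3; 2; 0]; [:: 4; 0; 2; 3; 1]; [:: 3; 0; 4; 2; 1]; [:: 0; 2; 4; 3; 1]; [:: 2; 0; 4; 1; 3]]; [:: [:: 4; 1; 2; 3; 0]; [:: 4; 0; 3; 2; 1]; [:: 3; 0; 2; 4; 1]; [:: 2; 0; 3; 4; 1]; [:: 2; 0; 1; 4; 3]]; [:: [:: 4; 1; 3; 2; 0]; [:: 0; 4; 3; 2; 1]; [:: 4; 0; 3; 1; 2]]; [:: [:: 4; 2; 0; 3; 1]; [:: 1; 4; 0; 3; 2]; [:: 4; 1; 2; 0; 3]]; [:: [:: 4; 2; 1; 0; 3]; [:: 1; 4; 2; 0; 3]; [:: 0; 4; 1; 2; 3]; [:: 3; 0; 1; 2; 4]]; [:: [:: 4; 2; 1; 3;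 0]; [:: 1; 3; 4; 2; 0]; [:: 2; 1; 4; 3; 0]; [:: 0; 2; 3; 4; 1]; [:: 1; 0; 4; 3; 2]; [:: 0; 1; 2; 4; 3]; [:: 1; 0; 3; 2; 4]]; [:: [:: 4; 2; 3; 0; 1]; [:: 2; 4; 0; 1; 3]; [:: 4; 1; 0; 2; 3]]; [:: [:: 4; 2; 3; 1; 0]; [:: 0; 4; 2; 3; 1]; [:: 4; 0; 1; 3; 2]]; [:: [:: 4; 3; 0; 1; 2]; [:: 2; 4; 1; 0; 3]; [:: 3; 2; 1; 0; 4]; [:: 1; 3; 0; 2; 4]; [:: 0; 3; 1; 2; 4]; [:: 2; 0; 1; 3; 4]]; [:: [:: 4; 3; 0; 2; 1]; [:: 0; 4; 3; 1; 2]; [:: 4; 0; 1; 2; 3]]; [:: [:: 4; 3; 1; 0; 2]; [:: 1; 4; 3; 0; 2]; [:: 3; 1; 4; 0; 2]; [:: 1; 2; 0; 4; 3]; [:: 2; 1; 3; 0; 4]]; [:: [:: 4; 3; 1; 2; 0]; [:: 0; 4; 1; 3; 2]; [:: 4; 0; 2; 1; 3]]; [:: [:: 4; 3; 2; 0; 1]; [:: 0; 3; 4; 2; 1]; [:: 3; 0; 4; 1; 2]; [:: 0; 1; 3; 4; 2]; [:: 1; 0; 2; 4; 3]]; [:: [:: 4; 3; 2; 1; 0]; [:: 0; 3; 2; 4; 1]; [:: 3; 0; 1; 4; 2]; [:: 0; 1; 4; 3; 2]; [:: 1; 0; 4; 2; 3]]]); ([:: false; true; true; false], [:: [:: [:: 2;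 4; 1; 0; 3]; [:: 4; 1; 2; 3; 0]; [:: 1; 3; 2; 0; 4]; [:: 1; 3; 0; 2; 4]; [:: 2; 1; 0; 3; 4]]; [:: [:: 2; 4; 1; 3; 0]; [:: 4; 2; 0; 1; 3]; [:: 1; 4; 0; 3; 2]; [:: 0; 4; 1; 3; 2]; [:: 3; 0; 1; 2; 4]]; [:: [:: 2; 4; 3; 0; 1]; [:: 2; 3; 4; 1; 0]; [:: 3; 2; 1; 4; 0]; [:: 2; 3; 0; 4; 1]; [:: 3; 1; 0; 2; 4]]; [:: [:: 2; 4; 3; 1; 0]; [:: 1; 4; 3; 2; 0]; [:: 1; 4; 2; 3; 0]; [:: 1; 2; 4; 3; 0]; [:: 2; 1; 3; 4; 0]; [:: 1; 2; 0; 3; 4]]; [:: [:: 3; 2; 4; 0; 1]; [:: 3; 1; 4; 0; 2]; [:: 3; 1; 2; 0; 4]; [:: 1; 2; 3; 4; 0]; [:: 2; 0; 3; 1; 4]]; [:: [:: 3; 2; 4; 1; 0]; [:: 3; 2; 1; 0; 4]; [:: 2; 3; 0; 1; 4]; [:: 3; 1; 0; 4; 2]]; [:: [:: 3; 4; 0; 1; 2]; [:: 4; 2; 0; 3; 1]; [:: 1; 4; 0; 2; 3]; [:: 0; 4; 1; 2; 3]; [:: 3; 0; 1; 4; 2]]; [:: [:: 3; 4; 0; 2; 1]; [:: 2; 4; 0; 1; 3]; [:: 4; 1; 0; 2; 3]]; [:: [:: 3; 4; 1; 0; 2]; [:: 2; 3; 1; 0; 4]; [:: 3; 2; 0; 1;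 4]; [:: 0; 3; 2; 4; 1]; [:: 0; 3; 1; 4; 2]; [:: 0; 2; 1; 3; 4]; [:: 0; 1; 2; 4; 3]]; [:: [:: 3; 4; 1; 2; 0]; [:: 1; 4; 3; 0; 2]; [:: 4; 0; 3; 1; 2]; [:: 3; 0; 4; 1; 2]; [:: 0; 2; 4; 3; 1]; [:: 0; 1; 4; 3; 2]; [:: 1; 0; 3; 2; 4]]; [:: [:: 3; 4; 2; 0; 1]; [:: 1; 4; 2; 0; 3]; [:: 2; 1; 4; 3; 0]; [:: 2; 0; 4; 3; 1]; [:: 1; 0; 4; 2; 3]; [:: 0; 1; 3; 4; 2]; [:: 1; 0; 2; 3; 4]]; [:: [:: 3; 4; 2; 1; 0]; [:: 2; 3; 4; 0; 1]; [:: 2; 3; 1; 4; 0]; [:: 3; 2; 0; 4; 1]; [:: 0; 3; 2; 1; 4]; [:: 2; 0; 3; 4; 1]]; [:: [:: 4; 1; 3; 0; 2]; [:: 4; 0; 3; 2; 1]; [:: 3; 0; 4; 2; 1]; [:: 2; 0; 4; 1; 3]; [:: 0; 1; 4; 2; 3]; [:: 1; 0; 3; 4; 2]]; [:: [:: 4; 1; 3; 2; 0]; [:: 3; 1; 4; 2; 0]; [:: 1; 2; 4; 0; 3]; [:: 2; 1; 3; 0; 4]; [:: 1; 2; 0; 4; 3]]; [:: [:: 4; 2; 1; 0; 3]; [:: 2; 4; 0; 3; 1]; [:: 4; 1; 0; 3; 2]]; [:: [:: 4; 2; 1; 3; 0]; [:: 4; 1; 2; 0; 3]; [:: 1; 3;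 2; 4; 0]; [:: 1; 3; 0; 4; 2]; [:: 0; 3; 1; 2; 4]; [:: 0; 2; 1; 4; 3]; [:: 0; 1; 2; 3; 4]]; [:: [:: 4; 2; 3; 0; 1]; [:: 1; 3; 4; 2; 0]; [:: 3; 1; 2; 4; 0]; [:: 1; 2; 3; 0; 4]; [:: 2; 1; 0; 4; 3]]; [:: [:: 4; 2; 3; 1; 0]; [:: 1; 3; 4; 0; 2]; [:: 2; 1; 4; 0; 3]; [:: 0; 2; 4; 1; 3]; [:: 1; 0; 4; 3; 2]; [:: 0; 1; 3; 2; 4]; [:: 1; 0; 2; 4; 3]]; [:: [:: 4; 3; 0; 1; 2]; [:: 0; 4; 3; 2; 1]; [:: 4; 0; 2; 3; 1]]; [:: [:: 4; 3; 0; 2; 1]; [:: 0; 4; 3; 1; 2]; [:: 4; 0; 2; 1; 3]]; [:: [:: 4; 3; 1; 0; 2]; [:: 0; 4; 2; 3; 1]; [:: 4; 0; 1; 2; 3]]; [:: [:: 4; 3; 1; 2; 0]; [:: 0; 4; 2; 1; 3]; [:: 4; 0; 1; 3; 2]]; [:: [:: 4; 3; 2; 0; 1]; [:: 0; 3; 4; 2; 1]; [:: 3; 0; 2; 4; 1]; [:: 0; 2; 3; 1; 4]; [:: 2; 0; 1; 4; 3]]; [:: [:: 4; 3; 2; 1; 0]; [:: 0; 3; 4; 1; 2]; [:: 3; 0; 2; 1; 4]; [:: 0; 2; 3; 4; 1]; [:: 2; 0; 1; 3; 4]]]); ([:: false; true; true; true], [:: [:: [:: 2; 3; 4; 1; 0];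 [:: 3; 2; 1; 4; 0]; [:: 3; 2; 0; 4; 1]; [:: 0; 3; 2; 4; 1]; [:: 3; 0; 2; 1; 4]]; [:: [:: 2; 4; 1; 3; 0]; [:: 4; 1; 2; 3; 0]; [:: 1; 2; 4; 3; 0]; [:: 2; 1; 4; 0; 3]; [:: 0; 2; 4; 1; 3]; [:: 0; 2; 1; 4; 3]; [:: 2; 0; 1; 3; 4]]; [:: [:: 2; 4; 3; 0; 1]; [:: 2; 3; 4; 0; 1]; [:: 3; 0; 4; 2; 1]; [:: 3; 0; 4; 1; 2]; [:: 0; 1; 4; 3; 2]; [:: 1; 0; 4; 2; 3]]; [:: [:: 2; 4; 3; 1; 0]; [:: 1; 4; 3; 2; 0]; [:: 4; 0; 3; 2; 1]; [:: 4; 0; 2; 3; 1]; [:: 0; 2; 4; 3; 1]; [:: 1; 0; 4; 3; 2]; [:: 1; 0; 3; 4; 2]; [:: 0; 1; 2; 4; 3]; [:: 1; 0; 2; 3; 4]]; [:: [:: 3; 2; 4; 1; 0]; [:: 3; 1; 4; 2; 0]; [:: 3; 1; 2; 4; 0]; [:: 2; 1; 3; 4; 0]; [:: 2; 0; 3; 4; 1]; [:: 0; 1; 3; 4; 2]; [:: 0; 1; 3; 2; 4]; [:: 0; 1; 2; 3; 4]]; [:: [:: 3; 4; 0; 2; 1]; [:: 3; 4; 0; 1; 2]; [:: 4; 2; 0; 1; 3]; [:: 0; 4; 2; 1; 3]; [:: 0; 4; 1; 2; 3]; [:: 0; 3; 1; 2; 4]; [:: 0; 2; 1; 3; 4]];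 [:: [:: 3; 4; 1; 0; 2]; [:: 4; 1; 3; 0; 2]; [:: 1; 3; 4; 0; 2]; [:: 3; 1; 0; 4; 2]; [:: 0; 3; 1; 4; 2]; [:: 2; 0; 1; 4; 3]]; [:: [:: 3; 4; 1; 2; 0]; [:: 1; 4; 2; 3; 0]; [:: 1; 3; 2; 4; 0]; [:: 3; 0; 2; 4; 1]; [:: 0; 2; 3; 4; 1]; [:: 2; 0; 3; 1; 4]]; [:: [:: 3; 4; 2; 0; 1]; [:: 2; 4; 0; 3; 1]; [:: 4; 1; 0; 3; 2]; [:: 1; 3; 0; 4; 2]; [:: 1; 2; 0; 4; 3]; [:: 2; 1; 0; 3; 4]]; [:: [:: 3; 4; 2; 1; 0]; [:: 1; 3; 4; 2; 0]; [:: 2; 1; 4; 3; 0]; [:: 1; 2; 3; 4; 0]; [:: 2; 1; 3; 0; 4]]; [:: [:: 4; 1; 3; 2; 0]; [:: 1; 4; 3; 0; 2]; [:: 3; 1; 4; 0; 2]; [:: 0; 3; 4; 1; 2]; [:: 3; 0; 1; 4; 2]]; [:: [:: 4; 2; 0; 3; 1]; [:: 2; 3; 0; 4; 1]; [:: 3; 2; 0; 1; 4]]; [:: [:: 4; 2; 1; 0; 3]; [:: 1; 4; 2; 0; 3]; [:: 1; 2; 4; 0; 3]; [:: 2; 1; 0; 4; 3]]; [:: [:: 4; 2; 1; 3; 0]; [:: 2; 3; 1; 4; 0]; [:: 3; 2; 1; 0; 4]; [:: 3; 1; 2; 0; 4]; [:: 0; 3; 2; 1; 4]; [:: 3; 0;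 1; 2; 4]]; [:: [:: 4; 2; 3; 0; 1]; [:: 3; 2; 4; 0; 1]; [:: 2; 3; 1; 0; 4]; [:: 2; 3; 0; 1; 4]; [:: 1; 3; 0; 2; 4]; [:: 1; 2; 0; 3; 4]]; [:: [:: 4; 2; 3; 1; 0]; [:: 0; 4; 3; 2; 1]; [:: 4; 0; 3; 1; 2]; [:: 0; 4; 1; 3; 2]; [:: 4; 0; 1; 2; 3]]; [:: [:: 4; 3; 0; 1; 2]; [:: 2; 4; 0; 1; 3]; [:: 4; 1; 0; 2; 3]]; [:: [:: 4; 3; 0; 2; 1]; [:: 1; 4; 0; 3; 2]; [:: 1; 4; 0; 2; 3]; [:: 3; 1; 0; 2; 4]]; [:: [:: 4; 3; 1; 0; 2]; [:: 2; 4; 1; 0; 3]; [:: 4; 1; 2; 0; 3]; [:: 1; 3; 2; 0; 4]; [:: 1; 2; 3; 0; 4]; [:: 0; 2; 3; 1; 4]; [:: 1; 0; 3; 2; 4]]; [:: [:: 4; 3; 1; 2; 0]; [:: 0; 4; 3; 1; 2]; [:: 4; 0; 1; 3; 2]]; [:: [:: 4; 3; 2; 0; 1]; [:: 0; 4; 2; 3; 1]; [:: 4; 0; 2; 1; 3]]; [:: [:: 4; 3; 2; 1; 0]; [:: 0; 3; 4; 2; 1]; [:: 2; 0; 4; 3; 1]; [:: 2; 0; 4; 1; 3]; [:: 0; 1; 4; 2; 3]; [:: 1; 0; 2; 4; 3]]]); ([:: true; false; false; false], [:: [:: [:: 4; 0; 1; 2; 3]; [:: 3; 4; 2; 1; 0];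 [:: 2; 0; 1; 3; 4]; [:: 1; 4; 3; 2; 0]; [:: 0; 1; 2; 3; 4]]; [:: [:: 4; 0; 1; 3; 2]; [:: 3; 4; 2; 0; 1]; [:: 2; 0; 1; 4; 3]; [:: 1; 4; 3; 0; 2]; [:: 0; 1; 2; 4; 3]]; [:: [:: 4; 0; 2; 1; 3]; [:: 3; 4; 1; 2; 0]; [:: 2; 0; 3; 1; 4]; [:: 1; 4; 2; 3; 0]; [:: 0; 1; 3; 2; 4]]; [:: [:: 4; 0; 2; 3; 1]; [:: 3; 4; 1; 0; 2]; [:: 2; 0; 3; 4; 1]; [:: 1; 4; 2; 0; 3]; [:: 0; 1; 3; 4; 2]]; [:: [:: 4; 0; 3; 1; 2]; [:: 3; 4; 0; 2; 1]; [:: 2; 0; 4; 1; 3]; [:: 1; 4; 0; 3; 2]; [:: 0; 1; 4; 2; 3]]; [:: [:: 4; 0; 3; 2; 1]; [:: 3; 4; 0; 1; 2]; [:: 2; 0; 4; 3; 1]; [:: 1; 4; 0; 2; 3]; [:: 0; 1; 4; 3; 2]]; [:: [:: 4; 1; 0; 2; 3]; [:: 3; 2; 4; 1; 0]; [:: 2; 1; 0; 3; 4]; [:: 1; 3; 4; 2; 0]; [:: 0; 2; 1; 3; 4]]; [:: [:: 4; 1; 0; 3; 2]; [:: 3; 2; 4; 0; 1]; [:: 2; 1; 0; 4; 3]; [:: 1; 3; 4; 0; 2]; [:: 0; 2; 1; 4; 3]]; [:: [:: 4; 1; 2; 0; 3]; [:: 3; 2; 1; 4; 0]; [:: 2; 1;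 3; 0; 4]; [:: 1; 3; 2; 4; 0]; [:: 0; 2; 3; 1; 4]]; [:: [:: 4; 1; 2; 3; 0]; [:: 3; 2; 1; 0; 4]; [:: 2; 1; 3; 4; 0]; [:: 1; 3; 2; 0; 4]; [:: 0; 2; 3; 4; 1]]; [:: [:: 4; 1; 3; 0; 2]; [:: 3; 2; 0; 4; 1]; [:: 2; 1; 4; 0; 3]; [:: 1; 3; 0; 4; 2]; [:: 0; 2; 4; 1; 3]]; [:: [:: 4; 1; 3; 2; 0]; [:: 3; 2; 0; 1; 4]; [:: 2; 1; 4; 3; 0]; [:: 1; 3; 0; 2; 4]; [:: 0; 2; 4; 3; 1]]; [:: [:: 4; 2; 0; 1; 3]; [:: 3; 1; 4; 2; 0]; [:: 2; 3; 0; 1; 4]; [:: 1; 2; 4; 3; 0]; [:: 0; 3; 1; 2; 4]]; [:: [:: 4; 2; 0; 3; 1]; [:: 3; 1; 4; 0; 2]; [:: 2; 3; 0; 4; 1]; [:: 1; 2; 4; 0; 3]; [:: 0; 3; 1; 4; 2]]; [:: [:: 4; 2; 1; 0; 3]; [:: 3; 1; 2; 4; 0]; [:: 2; 3; 1; 0; 4]; [:: 1; 2; 3; 4; 0]; [:: 0; 3; 2; 1; 4]]; [:: [:: 4; 2; 1; 3; 0]; [:: 3; 1; 2; 0; 4]; [:: 2; 3; 1; 4; 0]; [:: 1; 2; 3; 0; 4]; [:: 0; 3; 2; 4; 1]]; [:: [:: 4; 2; 3; 0; 1]; [:: 3; 1; 0; 4; 2]; [:: 2; 3; 4; 0; 1];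 [:: 1; 2; 0; 4; 3]; [:: 0; 3; 4; 1; 2]]; [:: [:: 4; 2; 3; 1; 0]; [:: 3; 1; 0; 2; 4]; [:: 2; 3; 4; 1; 0]; [:: 1; 2; 0; 3; 4]; [:: 0; 3; 4; 2; 1]]; [:: [:: 4; 3; 0; 1; 2]; [:: 3; 0; 4; 2; 1]; [:: 2; 4; 0; 1; 3]; [:: 1; 0; 4; 3; 2]; [:: 0; 4; 1; 2; 3]]; [:: [:: 4; 3; 0; 2; 1]; [:: 3; 0; 4; 1; 2]; [:: 2; 4; 0; 3; 1]; [:: 1; 0; 4; 2; 3]; [:: 0; 4; 1; 3; 2]]; [:: [:: 4; 3; 1; 0; 2]; [:: 3; 0; 2; 4; 1]; [:: 2; 4; 1; 0; 3]; [:: 1; 0; 3; 4; 2]; [:: 0; 4; 2; 1; 3]]; [:: [:: 4; 3; 1; 2; 0]; [:: 3; 0; 2; 1; 4]; [:: 2; 4; 1; 3; 0]; [:: 1; 0; 3; 2; 4]; [:: 0; 4; 2; 3; 1]]; [:: [:: 4; 3; 2; 0; 1]; [:: 3; 0; 1; 4; 2]; [:: 2; 4; 3; 0; 1]; [:: 1; 0; 2; 4; 3]; [:: 0; 4; 3; 1; 2]]; [:: [:: 4; 3; 2; 1; 0]; [:: 3; 0; 1; 2; 4]; [:: 2; 4; 3; 1; 0]; [:: 1; 0; 2; 3; 4]; [:: 0; 4; 3; 2; 1]]]); ([:: true; false; false; true], [:: [:: [:: 3; 1; 2; 4; 0]; [:: 2; 3; 1; 4; 0]; [:: 1; 3; 4;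 2; 0]; [:: 1; 3; 0; 4; 2]; [:: 1; 2; 0; 4; 3]; [:: 1; 2; 3; 0; 4]]; [:: [:: 3; 1; 4; 2; 0]; [:: 2; 4; 1; 3; 0]; [:: 1; 4; 2; 3; 0]; [:: 1; 0; 4; 3; 2]; [:: 1; 4; 2; 0; 3]; [:: 1; 0; 2; 3; 4]]; [:: [:: 3; 2; 1; 4; 0]; [:: 3; 0; 4; 2; 1]; [:: 3; 1; 0; 4; 2]; [:: 3; 1; 2; 0; 4]]; [:: [:: 3; 2; 4; 1; 0]; [:: 2; 1; 4; 3; 0]; [:: 2; 4; 3; 0; 1]; [:: 1; 0; 3; 4; 2]; [:: 1; 4; 0; 2; 3]; [:: 1; 0; 3; 2; 4]]; [:: [:: 3; 4; 1; 2; 0]; [:: 2; 1; 3; 4; 0]; [:: 1; 4; 3; 2; 0]; [:: 0; 3; 2; 4; 1]; [:: 0; 3; 4; 1; 2]; [:: 0; 2; 1; 4; 3]; [:: 0; 2; 3; 1; 4]]; [:: [:: 3; 4; 2; 1; 0]; [:: 2; 4; 3; 1; 0]; [:: 2; 3; 4; 0; 1]; [:: 0; 3; 4; 2; 1]; [:: 0; 4; 1; 3; 2]; [:: 0; 1; 4; 2; 3]; [:: 0; 3; 1; 2; 4]]; [:: [:: 4; 0; 1; 3; 2]; [:: 4; 2; 1; 0; 3]; [:: 2; 0; 1; 4; 3]; [:: 2; 3; 1; 0; 4]]; [:: [:: 4; 0; 2; 3; 1]; [:: 3; 4; 2; 0; 1]; [:: 3; 0; 1; 4; 2]; [:: 3;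 2; 1; 0; 4]]; [:: [:: 4; 0; 3; 1; 2]; [:: 4; 2; 0; 1; 3]; [:: 2; 0; 4; 1; 3]; [:: 2; 3; 0; 1; 4]]; [:: [:: 4; 0; 3; 2; 1]; [:: 3; 4; 0; 2; 1]; [:: 3; 0; 4; 1; 2]; [:: 3; 2; 0; 1; 4]]; [:: [:: 4; 1; 0; 3; 2]; [:: 4; 1; 2; 0; 3]; [:: 2; 1; 0; 4; 3]; [:: 2; 1; 3; 0; 4]]; [:: [:: 4; 1; 2; 3; 0]; [:: 2; 3; 4; 1; 0]; [:: 2; 4; 0; 3; 1]; [:: 0; 4; 3; 2; 1]; [:: 0; 1; 3; 4; 2]; [:: 0; 4; 1; 2; 3]; [:: 0; 1; 3; 2; 4]]; [:: [:: 4; 1; 3; 0; 2]; [:: 4; 1; 0; 2; 3]; [:: 2; 1; 4; 0; 3]; [:: 2; 1; 0; 3; 4]]; [:: [:: 4; 1; 3; 2; 0]; [:: 2; 3; 0; 4; 1]; [:: 0; 2; 4; 3; 1]; [:: 0; 4; 3; 1; 2]; [:: 0; 1; 2; 4; 3]; [:: 0; 3; 2; 1; 4]]; [:: [:: 4; 2; 0; 3; 1]; [:: 3; 2; 4; 0; 1]; [:: 3; 1; 4; 0; 2]; [:: 3; 1; 0; 2; 4]]; [:: [:: 4; 2; 1; 3; 0]; [:: 1; 2; 4; 3; 0]; [:: 1; 4; 0; 3; 2]; [:: 1; 0; 4; 2; 3]; [:: 1; 3; 0; 2; 4]]; [:: [:: 4; 2; 3; 0; 1]; [:: 3; 2; 0;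 4; 1]; [:: 3; 4; 0; 1; 2]; [:: 3; 0; 2; 1; 4]]; [:: [:: 4; 2; 3; 1; 0]; [:: 2; 0; 3; 4; 1]; [:: 0; 2; 3; 4; 1]; [:: 0; 3; 1; 4; 2]; [:: 0; 2; 4; 1; 3]; [:: 0; 2; 1; 3; 4]]; [:: [:: 4; 3; 0; 1; 2]; [:: 4; 0; 2; 1; 3]; [:: 2; 4; 0; 1; 3]; [:: 2; 0; 3; 1; 4]]; [:: [:: 4; 3; 0; 2; 1]; [:: 3; 0; 2; 4; 1]; [:: 3; 4; 1; 0; 2]; [:: 3; 0; 1; 2; 4]]; [:: [:: 4; 3; 1; 0; 2]; [:: 4; 0; 1; 2; 3]; [:: 2; 4; 1; 0; 3]; [:: 2; 0; 1; 3; 4]]; [:: [:: 4; 3; 1; 2; 0]; [:: 1; 3; 2; 4; 0]; [:: 1; 3; 4; 0; 2]; [:: 1; 2; 4; 0; 3]; [:: 1; 2; 0; 3; 4]]; [:: [:: 4; 3; 2; 0; 1]; [:: 2; 0; 4; 3; 1]; [:: 0; 4; 2; 3; 1]; [:: 0; 1; 4; 3; 2]; [:: 0; 4; 2; 1; 3]; [:: 0; 1; 2; 3; 4]]; [:: [:: 4; 3; 2; 1; 0]; [:: 1; 2; 3; 4; 0]; [:: 1; 4; 3; 0; 2]; [:: 1; 0; 2; 4; 3]; [:: 1; 3; 2; 0; 4]]]); ([:: true; false; true; false], [:: [:: [:: 3; 1; 4; 0; 2]; [:: 3; 1; 2; 4; 0]; [:: 3; 2; 0; 1; 4]; [:: 3;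 0; 1; 4; 2]]; [:: [:: 3; 1; 4; 2; 0]; [:: 3; 4; 0; 2; 1]; [:: 2; 4; 0; 3; 1]; [:: 1; 0; 4; 2; 3]; [:: 1; 3; 0; 4; 2]; [:: 1; 0; 2; 3; 4]]; [:: [:: 3; 2; 4; 0; 1]; [:: 2; 4; 3; 1; 0]; [:: 2; 1; 4; 0; 3]; [:: 2; 0; 4; 3; 1]; [:: 2; 0; 3; 4; 1]; [:: 2; 1; 0; 3; 4]]; [:: [:: 3; 2; 4; 1; 0]; [:: 2; 4; 3; 0; 1]; [:: 2; 1; 4; 3; 0]; [:: 2; 3; 1; 0; 4]; [:: 1; 3; 2; 0; 4]; [:: 0; 3; 2; 4; 1]]; [:: [:: 3; 4; 1; 0; 2]; [:: 1; 3; 4; 0; 2]; [:: 1; 4; 2; 0; 3]; [:: 1; 2; 3; 0; 4]; [:: 1; 0; 3; 4; 2]; [:: 1; 2; 0; 3; 4]]; [:: [:: 3; 4; 1; 2; 0]; [:: 3; 4; 0; 1; 2]; [:: 2; 4; 0; 1; 3]; [:: 1; 0; 4; 3; 2]; [:: 1; 3; 0; 2; 4]; [:: 1; 0; 2; 4; 3]]; [:: [:: 3; 4; 2; 0; 1]; [:: 2; 3; 4; 1; 0]; [:: 2; 4; 1; 3; 0]; [:: 2; 3; 1; 4; 0]; [:: 1; 2; 3; 4; 0]; [:: 1; 0; 3; 2; 4]; [:: 1; 2; 0; 4; 3]]; [:: [:: 3; 4; 2; 1; 0]; [:: 2; 3; 4; 0; 1]; [:: 2; 4; 1; 0; 3];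 [:: 2; 0; 4; 1; 3]; [:: 2; 3; 0; 4; 1]; [:: 2; 0; 1; 3; 4]]; [:: [:: 4; 0; 3; 1; 2]; [:: 4; 0; 2; 3; 1]; [:: 4; 1; 0; 2; 3]]; [:: [:: 4; 0; 3; 2; 1]; [:: 4; 0; 2; 1; 3]; [:: 4; 1; 0; 3; 2]]; [:: [:: 4; 1; 2; 0; 3]; [:: 4; 2; 0; 3; 1]; [:: 4; 0; 1; 2; 3]]; [:: [:: 4; 1; 2; 3; 0]; [:: 4; 2; 0; 1; 3]; [:: 4; 0; 1; 3; 2]]; [:: [:: 4; 1; 3; 0; 2]; [:: 3; 1; 2; 0; 4]; [:: 3; 2; 0; 4; 1]; [:: 3; 0; 1; 2; 4]]; [:: [:: 4; 1; 3; 2; 0]; [:: 1; 3; 4; 2; 0]; [:: 1; 4; 2; 3; 0]; [:: 1; 3; 2; 4; 0]; [:: 0; 3; 2; 1; 4]]; [:: [:: 4; 2; 1; 0; 3]; [:: 3; 2; 1; 4; 0]; [:: 2; 1; 3; 4; 0]; [:: 2; 3; 0; 1; 4]; [:: 2; 0; 1; 4; 3]]; [:: [:: 4; 2; 1; 3; 0]; [:: 3; 2; 1; 0; 4]; [:: 2; 1; 3; 0; 4]; [:: 2; 0; 3; 1; 4]; [:: 2; 1; 0; 4; 3]]; [:: [:: 4; 2; 3; 0; 1]; [:: 1; 4; 3; 2; 0]; [:: 1; 2; 4; 0; 3]; [:: 1; 4; 0; 2; 3]; [:: 0; 1; 4; 3; 2]; [:: 0; 3; 1; 2; 4]; [:: 0;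 1; 2; 4; 3]]; [:: [:: 4; 2; 3; 1; 0]; [:: 1; 4; 3; 0; 2]; [:: 1; 2; 4; 3; 0]; [:: 1; 4; 0; 3; 2]; [:: 0; 1; 4; 2; 3]; [:: 0; 3; 1; 4; 2]; [:: 0; 1; 2; 3; 4]]; [:: [:: 4; 3; 0; 1; 2]; [:: 3; 0; 4; 2; 1]; [:: 3; 0; 2; 1; 4]; [:: 3; 1; 0; 4; 2]]; [:: [:: 4; 3; 0; 2; 1]; [:: 3; 0; 4; 1; 2]; [:: 3; 0; 2; 4; 1]; [:: 3; 1; 0; 2; 4]]; [:: [:: 4; 3; 1; 0; 2]; [:: 0; 4; 3; 2; 1]; [:: 0; 2; 4; 3; 1]; [:: 0; 2; 3; 4; 1]; [:: 0; 1; 3; 2; 4]; [:: 0; 2; 1; 4; 3]]; [:: [:: 4; 3; 1; 2; 0]; [:: 0; 4; 3; 1; 2]; [:: 0; 2; 4; 1; 3]; [:: 0; 4; 1; 3; 2]]; [:: [:: 4; 3; 2; 0; 1]; [:: 0; 3; 4; 2; 1]; [:: 0; 4; 2; 1; 3]; [:: 0; 4; 1; 2; 3]]; [:: [:: 4; 3; 2; 1; 0]; [:: 0; 3; 4; 1; 2]; [:: 0; 4; 2; 3; 1]; [:: 0; 2; 3; 1; 4]; [:: 0; 1; 3; 4; 2]; [:: 0; 2; 1; 3; 4]]]); ([:: true; false; true; true], [:: [:: [:: 2; 4; 3; 1; 0]; [:: 2; 1; 4; 3; 0]; [:: 2; 3; 1; 4; 0]; [:: 2; 3; 1; 0; 4];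 [:: 2; 0; 3; 1; 4]; [:: 2; 0; 1; 3; 4]]; [:: [:: 3; 1; 4; 2; 0]; [:: 3; 2; 1; 4; 0]; [:: 2; 1; 3; 4; 0]; [:: 1; 3; 2; 4; 0]; [:: 1; 2; 3; 0; 4]; [:: 1; 3; 0; 2; 4]]; [:: [:: 3; 2; 4; 1; 0]; [:: 2; 3; 4; 1; 0]; [:: 1; 3; 4; 2; 0]; [:: 1; 3; 4; 0; 2]; [:: 1; 4; 2; 0; 3]; [:: 1; 0; 4; 2; 3]; [:: 1; 2; 0; 4; 3]]; [:: [:: 3; 4; 1; 2; 0]; [:: 2; 4; 1; 3; 0]; [:: 2; 0; 4; 3; 1]; [:: 2; 3; 0; 4; 1]; [:: 1; 0; 3; 4; 2]; [:: 1; 0; 3; 2; 4]; [:: 1; 0; 2; 3; 4]]; [:: [:: 3; 4; 2; 0; 1]; [:: 2; 4; 3; 0; 1]; [:: 2; 4; 0; 3; 1]; [:: 2; 0; 3; 4; 1]; [:: 2; 0; 1; 4; 3]; [:: 2; 1; 0; 3; 4]]; [:: [:: 3; 4; 2; 1; 0]; [:: 1; 4; 3; 2; 0]; [:: 1; 4; 2; 3; 0]; [:: 0; 4; 2; 3; 1]; [:: 0; 2; 3; 4; 1]; [:: 0; 2; 3; 1; 4]; [:: 0; 3; 1; 2; 4]]; [:: [:: 4; 0; 3; 1; 2]; [:: 4; 0; 2; 1; 3]; [:: 4; 0; 1; 2; 3]]; [:: [:: 4; 0; 3; 2; 1]; [:: 4; 0; 2; 3; 1]; [:: 4; 1; 0;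 3; 2]; [:: 1; 4; 0; 3; 2]; [:: 1; 3; 0; 4; 2]; [:: 1; 0; 2; 4; 3]; [:: 1; 2; 0; 3; 4]]; [:: [:: 4; 1; 2; 3; 0]; [:: 3; 1; 2; 4; 0]; [:: 3; 2; 1; 0; 4]; [:: 2; 1; 3; 0; 4]; [:: 2; 3; 0; 1; 4]]; [:: [:: 4; 1; 3; 0; 2]; [:: 3; 4; 1; 0; 2]; [:: 2; 4; 1; 0; 3]; [:: 1; 2; 4; 0; 3]; [:: 1; 3; 2; 0; 4]]; [:: [:: 4; 1; 3; 2; 0]; [:: 3; 0; 4; 2; 1]; [:: 3; 0; 2; 4; 1]; [:: 3; 1; 0; 4; 2]]; [:: [:: 4; 2; 0; 3; 1]; [:: 4; 0; 1; 3; 2]; [:: 4; 1; 0; 2; 3]]; [:: [:: 4; 2; 1; 0; 3]; [:: 3; 1; 2; 0; 4]; [:: 3; 2; 0; 1; 4]]; [:: [:: 4; 2; 1; 3; 0]; [:: 4; 1; 2; 0; 3]; [:: 4; 2; 0; 1; 3]; [:: 2; 0; 4; 1; 3]; [:: 2; 1; 0; 4; 3]]; [:: [:: 4; 2; 3; 0; 1]; [:: 3; 2; 4; 0; 1]; [:: 2; 3; 4; 0; 1]; [:: 2; 1; 4; 0; 3]; [:: 2; 4; 0; 1; 3]; [:: 0; 2; 4; 1; 3]; [:: 0; 4; 1; 2; 3]]; [:: [:: 4; 2; 3; 1; 0]; [:: 1; 4; 3; 0; 2]; [:: 1; 0; 4; 3; 2]; [:: 1; 4; 0; 2; 3]]; [::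 [:: 4; 3; 0; 1; 2]; [:: 3; 0; 4; 1; 2]; [:: 3; 0; 2; 1; 4]; [:: 3; 0; 1; 2; 4]]; [:: [:: 4; 3; 0; 2; 1]; [:: 3; 4; 0; 2; 1]; [:: 3; 2; 0; 4; 1]; [:: 3; 0; 1; 4; 2]; [:: 3; 1; 0; 2; 4]]; [:: [:: 4; 3; 1; 0; 2]; [:: 3; 1; 4; 0; 2]; [:: 3; 4; 0; 1; 2]; [:: 0; 3; 4; 1; 2]; [:: 0; 4; 2; 1; 3]; [:: 0; 1; 4; 2; 3]; [:: 0; 1; 3; 2; 4]; [:: 0; 1; 2; 3; 4]]; [:: [:: 4; 3; 1; 2; 0]; [:: 1; 2; 4; 3; 0]; [:: 1; 2; 3; 4; 0]; [:: 0; 3; 2; 4; 1]; [:: 0; 3; 2; 1; 4]]; [:: [:: 4; 3; 2; 0; 1]; [:: 0; 4; 3; 2; 1]; [:: 0; 2; 4; 3; 1]; [:: 0; 1; 4; 3; 2]; [:: 0; 3; 1; 4; 2]; [:: 0; 1; 2; 4; 3]; [:: 0; 2; 1; 3; 4]]; [:: [:: 4; 3; 2; 1; 0]; [:: 0; 3; 4; 2; 1]; [:: 0; 4; 3; 1; 2]; [:: 0; 4; 1; 3; 2]; [:: 0; 1; 3; 4; 2]; [:: 0; 2; 1; 4; 3]]]); ([:: true; true; false; false], [:: [:: [:: 3; 4; 0; 1; 2]; [:: 3; 2; 4; 1; 0]; [:: 3; 1; 0; 2; 4]; [:: 3; 0; 4; 2; 1]]; [:: [:: 3; 4; 0; 2;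 1]; [:: 3; 2; 4; 0; 1]; [:: 3; 1; 0; 4; 2]; [:: 3; 0; 4; 1; 2]]; [:: [:: 3; 4; 1; 0; 2]; [:: 3; 2; 1; 4; 0]; [:: 3; 1; 2; 0; 4]; [:: 3; 0; 2; 4; 1]]; [:: [:: 3; 4; 1; 2; 0]; [:: 3; 2; 1; 0; 4]; [:: 3; 1; 2; 4; 0]; [:: 3; 0; 2; 1; 4]]; [:: [:: 3; 4; 2; 0; 1]; [:: 3; 2; 0; 4; 1]; [:: 3; 1; 4; 0; 2]; [:: 3; 0; 1; 4; 2]]; [:: [:: 3; 4; 2; 1; 0]; [:: 3; 2; 0; 1; 4]; [:: 3; 1; 4; 2; 0]; [:: 3; 0; 1; 2; 4]]; [:: [:: 4; 1; 0; 2; 3]; [:: 4; 0; 3; 2; 1]; [:: 0; 4; 1; 2; 3]; [:: 0; 3; 4; 2; 1]; [:: 0; 2; 1; 3; 4]; [:: 0; 1; 4; 3; 2]]; [:: [:: 4; 1; 0; 3; 2]; [:: 4; 0; 3; 1; 2]; [:: 0; 4; 1; 3; 2]; [:: 0; 3; 4; 1; 2]; [:: 0; 2; 1; 4; 3]; [:: 0; 1; 4; 2; 3]]; [:: [:: 4; 1; 2; 0; 3]; [:: 4; 0; 2; 3; 1]; [:: 0; 4; 2; 1; 3]; [:: 0; 3; 2; 4; 1]; [:: 0; 2; 3; 1; 4]; [:: 0; 1; 3; 4; 2]]; [:: [:: 4; 1; 2; 3; 0]; [:: 4; 0; 2; 1; 3]; [:: 0; 4; 2; 3; 1]; [:: 0;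 3; 2; 1; 4]; [:: 0; 2; 3; 4; 1]; [:: 0; 1; 3; 2; 4]]; [:: [:: 4; 1; 3; 0; 2]; [:: 4; 0; 1; 3; 2]; [:: 0; 4; 3; 1; 2]; [:: 0; 3; 1; 4; 2]; [:: 0; 2; 4; 1; 3]; [:: 0; 1; 2; 4; 3]]; [:: [:: 4; 1; 3; 2; 0]; [:: 4; 0; 1; 2; 3]; [:: 0; 4; 3; 2; 1]; [:: 0; 3; 1; 2; 4]; [:: 0; 2; 4; 3; 1]; [:: 0; 1; 2; 3; 4]]; [:: [:: 4; 2; 0; 1; 3]; [:: 2; 4; 3; 1; 0]; [:: 2; 3; 0; 1; 4]; [:: 2; 1; 4; 3; 0]; [:: 2; 0; 1; 3; 4]]; [:: [:: 4; 2; 0; 3; 1]; [:: 2; 4; 3; 0; 1]; [:: 2; 3; 0; 4; 1]; [:: 2; 1; 4; 0; 3]; [:: 2; 0; 1; 4; 3]]; [:: [:: 4; 2; 1; 0; 3]; [:: 2; 4; 1; 3; 0]; [:: 2; 3; 1; 0; 4]; [:: 2; 1; 3; 4; 0]; [:: 2; 0; 3; 1; 4]]; [:: [:: 4; 2; 1; 3; 0]; [:: 2; 4; 1; 0; 3]; [:: 2; 3; 1; 4; 0]; [:: 2; 1; 3; 0; 4]; [:: 2; 0; 3; 4; 1]]; [:: [:: 4; 2; 3; 0; 1]; [:: 2; 4; 0; 3; 1]; [:: 2; 3; 4; 0; 1]; [:: 2; 1; 0; 4; 3]; [:: 2; 0; 4; 1; 3]]; [:: [:: 4; 2; 3; 1;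 0]; [:: 2; 4; 0; 1; 3]; [:: 2; 3; 4; 1; 0]; [:: 2; 1; 0; 3; 4]; [:: 2; 0; 4; 3; 1]]; [:: [:: 4; 3; 0; 1; 2]; [:: 1; 4; 3; 2; 0]; [:: 1; 3; 4; 2; 0]; [:: 1; 2; 0; 3; 4]; [:: 1; 0; 4; 3; 2]]; [:: [:: 4; 3; 0; 2; 1]; [:: 1; 4; 3; 0; 2]; [:: 1; 3; 4; 0; 2]; [:: 1; 2; 0; 4; 3]; [:: 1; 0; 4; 2; 3]]; [:: [:: 4; 3; 1; 0; 2]; [:: 1; 4; 2; 3; 0]; [:: 1; 3; 2; 4; 0]; [:: 1; 2; 3; 0; 4]; [:: 1; 0; 3; 4; 2]]; [:: [:: 4; 3; 1; 2; 0]; [:: 1; 4; 2; 0; 3]; [:: 1; 3; 2; 0; 4]; [:: 1; 2; 3; 4; 0]; [:: 1; 0; 3; 2; 4]]; [:: [:: 4; 3; 2; 0; 1]; [:: 1; 4; 0; 3; 2]; [:: 1; 3; 0; 4; 2]; [:: 1; 2; 4; 0; 3]; [:: 1; 0; 2; 4; 3]]; [:: [:: 4; 3; 2; 1; 0]; [:: 1; 4; 0; 2; 3]; [:: 1; 3; 0; 2; 4]; [:: 1; 2; 4; 3; 0]; [:: 1; 0; 2; 3; 4]]]); ([:: true; true; false; true], [:: [:: [:: 3; 2; 1; 4; 0]; [:: 3; 1; 4; 2; 0]; [:: 3; 0; 4; 2; 1]; [:: 3; 0; 1; 4; 2]; [:: 3; 0; 2; 1; 4]]; [:: [:: 3; 2;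 4; 1; 0]; [:: 3; 1; 2; 4; 0]; [:: 3; 1; 4; 0; 2]; [:: 1; 3; 0; 4; 2]; [:: 0; 3; 1; 4; 2]; [:: 0; 3; 2; 1; 4]]; [:: [:: 3; 4; 0; 2; 1]; [:: 3; 2; 4; 0; 1]; [:: 3; 2; 1; 0; 4]; [:: 2; 3; 0; 1; 4]; [:: 1; 3; 2; 0; 4]]; [:: [:: 3; 4; 1; 2; 0]; [:: 2; 4; 3; 1; 0]; [:: 2; 3; 4; 1; 0]; [:: 2; 1; 3; 4; 0]; [:: 2; 0; 4; 3; 1]; [:: 2; 0; 1; 4; 3]; [:: 2; 0; 3; 1; 4]]; [:: [:: 3; 4; 2; 0; 1]; [:: 2; 4; 3; 0; 1]; [:: 2; 3; 0; 4; 1]; [:: 2; 3; 1; 0; 4]; [:: 1; 3; 0; 2; 4]]; [:: [:: 3; 4; 2; 1; 0]; [:: 2; 4; 1; 3; 0]; [:: 1; 4; 3; 2; 0]; [:: 1; 4; 3; 0; 2]; [:: 0; 4; 3; 1; 2]; [:: 0; 4; 1; 2; 3]; [:: 0; 2; 4; 1; 3]; [:: 0; 2; 1; 3; 4]]; [:: [:: 4; 1; 0; 3; 2]; [:: 4; 1; 2; 0; 3]; [:: 1; 4; 0; 2; 3]; [:: 0; 4; 2; 1; 3]; [:: 0; 2; 1; 4; 3]; [:: 0; 2; 3; 1; 4]]; [:: [:: 4; 1; 2; 3; 0]; [:: 4; 0; 3; 2; 1]; [:: 4; 0; 1; 3; 2]; [:: 4; 0; 2; 1; 3]]; [:: [::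 4; 1; 3; 0; 2]; [:: 4; 1; 0; 2; 3]; [:: 1; 4; 2; 0; 3]; [:: 1; 2; 0; 4; 3]; [:: 1; 2; 3; 0; 4]]; [:: [:: 4; 1; 3; 2; 0]; [:: 1; 4; 2; 3; 0]; [:: 1; 4; 0; 3; 2]; [:: 0; 4; 1; 3; 2]; [:: 0; 3; 4; 1; 2]; [:: 0; 3; 1; 2; 4]]; [:: [:: 4; 2; 0; 1; 3]; [:: 3; 2; 0; 1; 4]; [:: 3; 1; 0; 2; 4]]; [:: [:: 4; 2; 0; 3; 1]; [:: 4; 0; 2; 3; 1]; [:: 4; 0; 3; 1; 2]; [:: 4; 0; 1; 2; 3]]; [:: [:: 4; 2; 1; 0; 3]; [:: 2; 4; 1; 0; 3]; [:: 2; 1; 4; 0; 3]; [:: 2; 1; 0; 3; 4]]; [:: [:: 4; 2; 1; 3; 0]; [:: 1; 3; 4; 2; 0]; [:: 1; 2; 4; 3; 0]; [:: 1; 0; 3; 4; 2]; [:: 1; 0; 4; 2; 3]; [:: 1; 0; 2; 3; 4]]; [:: [:: 4; 2; 3; 0; 1]; [:: 3; 2; 0; 4; 1]; [:: 3; 0; 2; 4; 1]; [:: 3; 0; 4; 1; 2]; [:: 3; 0; 1; 2; 4]]; [:: [:: 4; 2; 3; 1; 0]; [:: 2; 3; 1; 4; 0]; [:: 2; 1; 4; 3; 0]; [:: 2; 0; 3; 4; 1]; [:: 2; 0; 4; 1; 3]; [:: 2; 0; 1; 3; 4]]; [:: [:: 4; 3; 0; 1; 2]; [:: 3; 4; 1;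 0; 2]; [:: 3; 1; 0; 4; 2]; [:: 3; 1; 2; 0; 4]]; [:: [:: 4; 3; 0; 2; 1]; [:: 2; 4; 0; 3; 1]; [:: 2; 3; 4; 0; 1]; [:: 1; 3; 4; 0; 2]; [:: 1; 0; 4; 3; 2]; [:: 1; 0; 2; 4; 3]; [:: 1; 0; 3; 2; 4]]; [:: [:: 4; 3; 1; 0; 2]; [:: 3; 4; 0; 1; 2]; [:: 2; 4; 0; 1; 3]; [:: 2; 1; 0; 4; 3]; [:: 2; 1; 3; 0; 4]]; [:: [:: 4; 3; 1; 2; 0]; [:: 1; 3; 2; 4; 0]; [:: 1; 2; 3; 4; 0]; [:: 1; 2; 4; 0; 3]; [:: 1; 2; 0; 3; 4]]; [:: [:: 4; 3; 2; 0; 1]; [:: 0; 4; 3; 2; 1]; [:: 0; 3; 2; 4; 1]; [:: 0; 2; 3; 4; 1]; [:: 0; 1; 3; 4; 2]; [:: 0; 1; 4; 2; 3]; [:: 0; 1; 2; 3; 4]]; [:: [:: 4; 3; 2; 1; 0]; [:: 0; 4; 2; 3; 1]; [:: 0; 3; 4; 2; 1]; [:: 0; 2; 4; 3; 1]; [:: 0; 1; 4; 3; 2]; [:: 0; 1; 2; 4; 3]; [:: 0; 1; 3; 2; 4]]]); ([:: true; true; true; false], [:: [:: [:: 2; 4; 3; 1; 0]; [:: 2; 4; 1; 3; 0]; [:: 2; 3; 1; 4; 0]; [:: 2; 1; 3; 4; 0]; [:: 2; 1; 0; 3; 4]]; [:: [:: 3; 2; 4; 0; 1]; [:: 3; 2;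 1; 0; 4]; [:: 3; 1; 2; 0; 4]; [:: 3; 1; 0; 4; 2]]; [:: [:: 3; 2; 4; 1; 0]; [:: 3; 1; 4; 2; 0]; [:: 3; 0; 4; 2; 1]; [:: 3; 0; 2; 1; 4]; [:: 3; 0; 1; 4; 2]]; [:: [:: 3; 4; 1; 0; 2]; [:: 3; 1; 4; 0; 2]; [:: 3; 0; 4; 1; 2]; [:: 3; 0; 2; 4; 1]; [:: 3; 0; 1; 2; 4]]; [:: [:: 3; 4; 1; 2; 0]; [:: 1; 4; 3; 0; 2]; [:: 1; 4; 2; 3; 0]; [:: 1; 3; 2; 0; 4]; [:: 1; 2; 3; 0; 4]; [:: 1; 2; 0; 4; 3]]; [:: [:: 3; 4; 2; 0; 1]; [:: 2; 4; 3; 0; 1]; [:: 2; 3; 4; 1; 0]; [:: 2; 1; 4; 0; 3]; [:: 2; 0; 4; 3; 1]; [:: 2; 0; 3; 1; 4]; [:: 2; 0; 1; 4; 3]]; [:: [:: 3; 4; 2; 1; 0]; [:: 2; 4; 1; 0; 3]; [:: 2; 3; 1; 0; 4]; [:: 2; 1; 3; 0; 4]; [:: 2; 1; 0; 4; 3]]; [:: [:: 4; 1; 2; 3; 0]; [:: 4; 1; 0; 2; 3]; [:: 1; 4; 0; 3; 2]; [:: 1; 3; 0; 2; 4]]; [:: [:: 4; 1; 3; 0; 2]; [:: 4; 0; 3; 2; 1]; [:: 4; 0; 2; 1; 3]; [:: 4; 0; 1; 3; 2]]; [:: [:: 4; 1; 3; 2; 0]; [:: 4; 0; 3; 1; 2];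 [:: 4; 0; 2; 3; 1]; [:: 4; 0; 1; 2; 3]]; [:: [:: 4; 2; 0; 1; 3]; [:: 3; 2; 0; 4; 1]; [:: 2; 3; 0; 1; 4]; [:: 0; 3; 2; 4; 1]; [:: 0; 3; 1; 2; 4]]; [:: [:: 4; 2; 0; 3; 1]; [:: 3; 2; 0; 1; 4]; [:: 2; 3; 0; 4; 1]; [:: 0; 3; 2; 1; 4]; [:: 0; 3; 1; 4; 2]]; [:: [:: 4; 2; 1; 0; 3]; [:: 4; 1; 2; 0; 3]; [:: 4; 1; 0; 3; 2]; [:: 1; 4; 0; 2; 3]; [:: 1; 3; 0; 4; 2]]; [:: [:: 4; 2; 1; 3; 0]; [:: 3; 2; 1; 4; 0]; [:: 3; 1; 2; 4; 0]; [:: 3; 1; 0; 2; 4]]; [:: [:: 4; 2; 3; 0; 1]; [:: 2; 3; 4; 0; 1]; [:: 2; 1; 4; 3; 0]; [:: 2; 0; 4; 1; 3]; [:: 2; 0; 3; 4; 1]; [:: 2; 0; 1; 3; 4]]; [:: [:: 4; 2; 3; 1; 0]; [:: 1; 4; 3; 2; 0]; [:: 1; 4; 2; 0; 3]; [:: 1; 3; 2; 4; 0]; [:: 1; 2; 3; 4; 0]; [:: 1; 2; 0; 3; 4]]; [:: [:: 4; 3; 0; 1; 2]; [:: 3; 4; 0; 2; 1]; [:: 2; 4; 0; 1; 3]; [:: 0; 4; 2; 1; 3]; [:: 0; 4; 1; 2; 3]; [:: 0; 1; 4; 3; 2]; [:: 0; 1; 3; 2; 4]; [:: 0; 1; 2;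 4; 3]]; [:: [:: 4; 3; 0; 2; 1]; [:: 3; 4; 0; 1; 2]; [:: 2; 4; 0; 3; 1]; [:: 0; 4; 2; 3; 1]; [:: 0; 4; 1; 3; 2]; [:: 0; 1; 4; 2; 3]; [:: 0; 1; 3; 4; 2]; [:: 0; 1; 2; 3; 4]]; [:: [:: 4; 3; 1; 0; 2]; [:: 1; 3; 4; 2; 0]; [:: 1; 2; 4; 0; 3]; [:: 1; 0; 4; 2; 3]; [:: 1; 0; 3; 4; 2]; [:: 1; 0; 2; 3; 4]]; [:: [:: 4; 3; 1; 2; 0]; [:: 1; 3; 4; 0; 2]; [:: 1; 2; 4; 3; 0]; [:: 1; 0; 4; 3; 2]; [:: 1; 0; 3; 2; 4]; [:: 1; 0; 2; 4; 3]]; [:: [:: 4; 3; 2; 0; 1]; [:: 0; 4; 3; 2; 1]; [:: 0; 3; 4; 2; 1]; [:: 0; 2; 4; 1; 3]; [:: 0; 2; 3; 4; 1]; [:: 0; 2; 1; 3; 4]]; [:: [:: 4; 3; 2; 1; 0]; [:: 0; 4; 3; 1; 2]; [:: 0; 3; 4; 1; 2]; [:: 0; 2; 4; 3; 1]; [:: 0; 2; 3; 1; 4]; [:: 0; 2; 1; 4; 3]]]); ([:: true; true; true; true], [:: [:: [:: 2; 4; 3; 1; 0]; [:: 2; 3; 4; 1; 0]; [:: 2; 1; 4; 3; 0]; [:: 2; 1; 3; 4; 0]; [:: 2; 0; 3; 4; 1]; [:: 2; 0; 3; 1; 4]]; [:: [:: 3; 2; 1; 4; 0]; [:: 3; 2;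 0; 4; 1]; [:: 3; 1; 0; 4; 2]; [:: 3; 1; 0; 2; 4]]; [:: [:: 3; 2; 4; 0; 1]; [:: 3; 2; 1; 0; 4]; [:: 2; 3; 1; 0; 4]; [:: 2; 1; 3; 0; 4]]; [:: [:: 3; 2; 4; 1; 0]; [:: 3; 1; 4; 2; 0]; [:: 3; 1; 2; 4; 0]; [:: 3; 0; 2; 4; 1]; [:: 3; 0; 2; 1; 4]]; [:: [:: 3; 4; 1; 2; 0]; [:: 2; 4; 1; 3; 0]; [:: 2; 3; 1; 4; 0]; [:: 2; 3; 0; 4; 1]; [:: 0; 3; 2; 4; 1]; [:: 0; 3; 1; 4; 2]; [:: 0; 3; 1; 2; 4]]; [:: [:: 3; 4; 2; 0; 1]; [:: 2; 3; 4; 0; 1]; [:: 2; 0; 4; 3; 1]; [:: 2; 0; 4; 1; 3]; [:: 2; 0; 1; 4; 3]; [:: 2; 0; 1; 3; 4]]; [:: [:: 3; 4; 2; 1; 0]; [:: 1; 4; 2; 3; 0]; [:: 1; 3; 2; 4; 0]; [:: 1; 2; 3; 4; 0]; [:: 1; 0; 3; 4; 2]; [:: 1; 0; 3; 2; 4]]; [:: [:: 4; 0; 3; 2; 1]; [:: 4; 0; 3; 1; 2]; [:: 4; 0; 1; 3; 2]; [:: 4; 0; 1; 2; 3]]; [:: [:: 4; 1; 2; 3; 0]; [:: 4; 1; 2; 0; 3]; [:: 3; 1; 2; 0; 4]; [:: 1; 3; 2; 0; 4]; [:: 1; 2; 3; 0; 4]]; [:: [:: 4; 1; 3; 0; 2];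 [:: 3; 1; 4; 0; 2]; [:: 2; 1; 4; 0; 3]; [:: 2; 1; 0; 4; 3]; [:: 2; 1; 0; 3; 4]]; [:: [:: 4; 1; 3; 2; 0]; [:: 1; 4; 3; 2; 0]; [:: 1; 4; 3; 0; 2]; [:: 1; 3; 4; 0; 2]; [:: 1; 2; 4; 0; 3]; [:: 1; 2; 0; 4; 3]; [:: 1; 2; 0; 3; 4]]; [:: [:: 4; 2; 0; 3; 1]; [:: 4; 0; 2; 3; 1]; [:: 4; 0; 2; 1; 3]]; [:: [:: 4; 2; 1; 0; 3]; [:: 4; 2; 0; 1; 3]; [:: 3; 2; 0; 1; 4]; [:: 2; 3; 0; 1; 4]]; [:: [:: 4; 2; 1; 3; 0]; [:: 2; 4; 0; 3; 1]; [:: 1; 4; 0; 3; 2]; [:: 1; 3; 0; 4; 2]; [:: 1; 3; 0; 2; 4]]; [:: [:: 4; 2; 3; 0; 1]; [:: 2; 4; 3; 0; 1]; [:: 2; 4; 1; 0; 3]; [:: 1; 4; 2; 0; 3]; [:: 0; 4; 2; 1; 3]; [:: 0; 3; 2; 1; 4]; [:: 0; 2; 3; 1; 4]]; [:: [:: 4; 2; 3; 1; 0]; [:: 1; 3; 4; 2; 0]; [:: 1; 2; 4; 3; 0]; [:: 1; 0; 4; 3; 2]; [:: 1; 0; 4; 2; 3]; [:: 1; 0; 2; 4; 3]; [:: 1; 0; 2; 3; 4]]; [:: [:: 4; 3; 0; 1; 2]; [:: 4; 1; 0; 3; 2]; [:: 4; 1; 0; 2; 3]]; [:: [:: 4; 3;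 0; 2; 1]; [:: 3; 4; 0; 2; 1]; [:: 3; 0; 4; 2; 1]; [:: 3; 0; 4; 1; 2]; [:: 3; 0; 1; 4; 2]; [:: 3; 0; 1; 2; 4]]; [:: [:: 4; 3; 1; 0; 2]; [:: 3; 4; 1; 0; 2]; [:: 3; 4; 0; 1; 2]; [:: 2; 4; 0; 1; 3]; [:: 1; 4; 0; 2; 3]; [:: 0; 4; 1; 2; 3]]; [:: [:: 4; 3; 1; 2; 0]; [:: 0; 4; 3; 2; 1]; [:: 0; 4; 3; 1; 2]; [:: 0; 3; 4; 1; 2]; [:: 0; 2; 4; 1; 3]; [:: 0; 2; 1; 4; 3]; [:: 0; 2; 1; 3; 4]]; [:: [:: 4; 3; 2; 0; 1]; [:: 0; 4; 2; 3; 1]; [:: 0; 4; 1; 3; 2]; [:: 0; 1; 4; 3; 2]; [:: 0; 1; 4; 2; 3]; [:: 0; 1; 2; 4; 3]; [:: 0; 1; 2; 3; 4]]; [:: [:: 4; 3; 2; 1; 0]; [:: 0; 3; 4; 2; 1]; [:: 0; 2; 4; 3; 1]; [:: 0; 2; 3; 4; 1]; [:: 0; 1; 3; 4; 2]; [:: 0; 1; 3; 2; 4]]])].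
Lemma chk3 : check 2 tbl3 2. Proof. vm_compute. reflexivity. Qed.
Lemma chk5 : check 4 tbl5 24. Proof. vm_compute. reflexivity. Qed.

Definition code {n} (s : 'S_n) : seq nat := [seq val (s i) | i <- enum 'I_n].

Lemma nth_code n (s : 'S_n) (i : 'I_n) : nth 0%N (code s) i = s i.
Proof.
by rewrite /code (nth_map i) ?size_enum_ord ?ltn_ord // nth_ord_enum.
Qed.

Lemma code_perm n (s : 'S_n) : perm_eq (code s) (iota 0 n).
Proof.
apply: uniq_perm; first by rewrite map_inj_uniq ?enum_uniq // => i j /val_inj /perm_inj.
  exact: iota_uniq.
move=> x; rewrite mem_iota add0n /=; apply/mapP/idP.
  by case=> i _ ->; exact: ltn_ord.
move=> hx; exists ((s^-1)%g (Ordinal hx)); first by rewrite mem_enum.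
by rewrite permKV.
Qed.

Lemma code_inj n (s t : 'S_n) : code s = code t -> s = t.
Proof.
move=> e; apply/permP => i; apply: val_inj.
by have := congr1 (fun c => nth 0%N c i) e; rewrite !nth_code.
Qed.

Lemma sort_ex (R : realType) n (f : 'I_n -> R) :
  exists pi : 'S_n, forall i j : 'I_n, (i <= j)%N -> f (pi i) <= f (pi j).
Proof.
set t := [tuple f i | i < n].
have hp : perm_eq (sort <=%R (t : seq R)) t by rewrite perm_sort perm_refl.
case/tuple_permP: hp => pi hpi; exists pi => i j hij.
have hs : sorted <=%R (sort <=%R (t : seq R)) by apply: sort_sorted; exact: le_total.
have hsz : size (sort <=%R (t : seq R)) = n by rewrite size_sort size_tuple.
have := sorted_leq_nth le_trans lexx 0 hs; rewrite hpi => H.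
have := H i j; rewrite !inE size_tuple => /(_ (ltn_ord i) (ltn_ord j) hij).
by rewrite -!tnth_nth !tnth_mktuple.
Qed.

Lemma in_allbools m K : size K = m -> K \in allbools m.
Proof.
elim: K m => [|b K IH] [|m] //= [hm].
have hK := IH _ hm.
by case: b; rewrite /= !mem_cat (map_f _ hK) ?orbT.
Qed.

Lemma main_gen (R : realType) n (tbl : seq (seq bool * seq (seq (seq nat)))) B
  (hchk : check n tbl B)
  (a v : 'rV[R]_n.+1) (ha : a != 0) (hv : injective (fun k => v ord0 k))
  (hs : \sum_(k < n.+1) v ord0 k != 0) :
  (card_hyp_orbit a v <= B)%N.
Proof.
set l := [seq s : 'S_n.+1 <- enum [set: 'S_n.+1] | \sum_k a ord0 k * v ord0 (s k) == 0].
have h1 : (card_hyp_orbit a v <= size l)%N.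
  rewrite /card_hyp_orbit /Sp_orbit filter_undup.
  apply: leq_trans (size_undup _) _.
  rewrite filter_map size_map; apply/eq_leq; congr size; apply: eq_filter => s /=.
  rewrite unfold_in /hyperplane /=.
  by congr (_ == _); apply: eq_bigr => k _; rewrite mxE.
apply: leq_trans h1 _.
have [pi hpi] := sort_ex R _ (fun k => a ord0 k).
have [rho hrho] := sort_ex R _ (fun k => v ord0 k).
pose A i := a ord0 (pi (inord i)).
pose V j := v ord0 (rho (inord j)).
pose K := [seq (A k < A k.+1) | k <- iota 0 n].
have hA : forall k, (k < n)%N -> A k <= A k.+1.
  move=> k hk; apply: hpi; rewrite !inordK //; exact: ltnW.
have hV : forall m, (m < n)%N -> V m < V m.+1.
  move=> m hm; rewrite lt_neqAle; apply/andP; split; last first.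
    apply: hrho; rewrite !inordK //; exact: ltnW.
  apply/negP => /eqP /hv /perm_inj /(congr1 (@nat_of_ord _)).
  rewrite !inordK //; last exact: ltnW.
  by move/eqP; rewrite eqn_leq ltnn andbF.
have hK : forall k, (k < n)%N -> nth false K k = (A k < A k.+1).
  by move=> k hk; rewrite (nth_map 0%N) ?size_iota // nth_iota.
have hsizeK : size K = n by rewrite size_map size_iota.
have hL : forall s : 'S_n.+1,
    \sum_k a ord0 k * v ord0 (s k) = Lc n.+1 A V (code (pi * s * rho^-1)%g).
  move=> s; rewrite (reindex_inj (@perm_inj _ pi)) /Lc big_mkord.
  apply: eq_bigr => k _; rewrite nth_code /A /V !inord_val !permM.
  by rewrite permKV.
case hhas: (has id K); last first.
  have hconst : forall k, (k < n.+1)%N -> A k = A 0%N.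
    elim=> [//|k IH] hk.
    have hk' : (k < n)%N by [].
    rewrite -IH ?(ltnW hk) //.
    have hn : ~~ (A k < A k.+1).
      rewrite -hK //; apply/negP => h; move/negP: hhas; apply.
      by apply/hasP; exists (nth false K k) => //; rewrite mem_nth // hsizeK.
    by apply/eqP; rewrite eq_le hA // andbT leNgt.
  have hA0 : A 0%N != 0.
    apply: contra ha => /eqP h0; apply/eqP/matrixP => i j.
    rewrite (ord1 i) mxE.
    have := hconst ((pi^-1)%g j) (ltn_ord _); rewrite h0 /A inord_val permKV => ->.
    by [].
  have -> : l = [::].
    apply/eqP; rewrite -size_eq0 size_filter -leqn0 leqNgt -has_count; apply/hasP => -[s _].
    rewrite (reindex_inj (@perm_inj _ pi)) /=.
    have -> : \sum_j a ord0 (pi j) * v ord0 (s (pi j)) = A 0%N * \sum_j v ord0 (s (pi j)).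
      rewrite mulr_sumr; apply: eq_bigr => j _.
      by rewrite -(hconst j (ltn_ord j)) /A inord_val.
    have -> : \sum_j v ord0 (s (pi j)) = \sum_j v ord0 j.
      by rewrite [RHS](reindex_inj (@perm_inj _ s)) [RHS](reindex_inj (@perm_inj _ pi)).
    by rewrite mulf_eq0 (negbTE hA0) (negbTE hs).
  by [].
have hck : chain_ok n.+1 K (getch tbl K) B.
  by have := allP hchk K (in_allbools _ _ hsizeK); rewrite hhas.
set chs := getch tbl K in hck.
case/and3P: hck => hszB /allP hcov /allP hpair.
pose g (s : 'S_n.+1) := find (fun ch => code (pi * s * rho^-1)%g \in ch) chs.
have hg : forall s, has (fun ch => code (pi * s * rho^-1)%g \in ch) chs.
  by move=> s; apply: hcov; rewrite mem_permutations code_perm.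
have hzero : forall s, s \in l -> Lc n.+1 A V (code (pi * s * rho^-1)%g) = 0.
  by move=> s; rewrite mem_filter -hL => /andP[/eqP].
apply: leq_trans hszB.
rewrite -(size_map g) -(size_iota 0 (size chs)).
apply: uniq_leq_size.
  rewrite map_inj_in_uniq; first by rewrite filter_uniq // enum_uniq.
  move=> s t hs' ht' e.
  have hs1 : code (pi * s * rho^-1)%g \in nth [::] chs (g s) := nth_find [::] (hg s).
  have ht1 : code (pi * t * rho^-1)%g \in nth [::] chs (g t) := nth_find [::] (hg t).
  rewrite -e in ht1.
  have hch : nth [::] chs (g s) \in chs by rewrite mem_nth // -has_find.
  have := allP (allP (hpair _ hch) _ hs1) _ ht1.
  case/orP => [/orP[/eqP hc | hr] | hr].
  - by move/code_inj: hc => /mulIg /mulgI.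
  - have := @rel_lt R n.+1 A V K _ _ hA hK hV (code_perm _ _) (code_perm _ _) hr.
    by rewrite !hzero // ltxx.
  - have := @rel_lt R n.+1 A V K _ _ hA hK hV (code_perm _ _) (code_perm _ _) hr.
    by rewrite !hzero // ltxx.
move=> x /mapP[s _ ->]; rewrite mem_iota /= -has_find; exact: hg.
Qed.

Theorem corollary4p5 (R : realType) (p : nat) (hp : p = 3%N \/ p = 5%N)
  (a v : 'rV[R]_p) (ha : a != 0)
  (hv : injective (fun k : 'I_p => v ord0 k))
  (hs : \sum_(k < p) v ord0 k != 0) :
  (card_hyp_orbit a v <= (p.-1)`!)%N.
Proof.
case: hp => hp; subst p.
- by apply: leq_trans (@main_gen R 2 tbl3 2 chk3 a v ha hv hs) _.
- by apply: leq_trans (@main_gen R 4 tbl5 24 chk5 a v ha hv hs) _.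
Qed.
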